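(* Let $\Lambda$ be an abelian group and $\mathrm{Coc}=\{c:V\to\prod_{\mathbf{Q}_2}\Lambda:\ c_{vw}=c_v\cdot c_w^v\ \forall v,w\in V\}$, where $c_w^v(x)=c_w(v^{-1}x)$. Then: (1) with the pointwise product $(c\cdot d)_v(x)=c_v(x)d_v(x)$, $\mathrm{Coc}$ is an abelian group; (2) for each $\zeta\in\Lambda$, $s(\zeta)_v(x)=\zeta^{\log_2(v'(v^{-1}x))}$ defines an element of $\mathrm{Coc}$; (3) for every $c\in\mathrm{Coc}$ there exist $\zeta\in\Lambda$ and $f\in\prod_{\mathbf{Q}_2}\Lambda$ with $c_v=s(\zeta)_v\cdot f(f^v)^{-1}$ for all $v\in V$, and the pair $(\zeta,f)$ is unique up to multiplying $f$ by a constant map; (4) the assignment $c\mapsto(\zeta,f)$ is a group isomorphism from $\mathrm{Coc}$ onto $\Lambda\times\big(\prod_{\mathbf{Q}_2}\Lambda\big)/\Lambda$ (with $\Lambda$ embedded as constant maps).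
   Context: Cantor space $\mathfrak C=\{0,1\}^{\mathbf N}$; $C_m=\{m\cdot x\}$. Thompson's group $V$: homeomorphisms $v$ with $v(m_kx)=m'_kx$ for partitions $\mathfrak C=\bigsqcup C_{m_k}=\bigsqcup C_{m'_k}$; slope $v'(x)=2^{|m_k|-|m'_k|}$ on $C_{m_k}$. $\mathbf{Q}_2\subset\mathfrak C$: eventually-zero sequences (a $V$-invariant set). For $f\in\prod_{\mathbf{Q}_2}\Lambda$, $f^v(x)=f(v^{-1}x)$. *)

(* Defs.v *)
(* (abelian group Lambda = zmodType, written additively). *)
From mathcomp Require Import all_boot all_order all_algebra.
From Stdlib Require Import ClassicalEpsilon.
Set Implicit Arguments. Unset Strict Implicit. Unset Printing Implicit Defensive.
Import GRing.Theory.
Local Open Scope ring_scope.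

Definition cantor := nat -> bool.

Definition prepend (m : seq bool) (x : cantor) : cantor :=
  fun n => if (n < size m)%N then nth false m n else x (n - size m)%N.

Definition inCyl (m : seq bool) (x : cantor) : Prop :=
  forall i, (i < size m)%N -> x i = nth false m i.

Definition isPartition (ms : seq (seq bool)) : Prop :=
  forall x : cantor, exists! k : nat, (k < size ms)%N /\ inCyl (nth [::] ms k) x.

(* Thompson's group V, as a set of maps of Cantor space:
   v (m_k x) = m'_k x for two partitions (m_k), (m'_k). *)
Definition inV (v : cantor -> cantor) : Prop :=
  exists ps : seq (seq bool * seq bool),
    isPartition (map fst ps) /\ isPartition (map snd ps) /\
    forall k, (k < size ps)%N -> forall y,
      v (prepend (nth ([::], [::]) ps k).1 y) = prepend (nth ([::], [::]) ps k).2 y.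

(* log_2 of the slope v'(x): on C_m with v(m y) = m' y, it is |m| - |m'|. *)
Definition logslope (v : cantor -> cantor) (x : cantor) : int :=
  epsilon (inhabits 0%R) (fun k : int => exists m m' : seq bool,
    inCyl m x /\ (forall y, v (prepend m y) = prepend m' y) /\
    k = (size m)%:Z - (size m')%:Z).

(* inverse map (well defined on bijections, e.g. elements of V) *)
Definition vinv (v : cantor -> cantor) (y : cantor) : cantor :=
  epsilon (inhabits y) (fun x => v x = y).

Definition isQ2 (x : cantor) : Prop := exists N, forall n, (N <= n)%N -> x n = false.
Definition Q2 := {x : cantor | isQ2 x}.

(* action of a map on Q_2 (for g in V, g preserves Q_2, so the fallback
   branch is never used) *)
Definition actQ (g : cantor -> cantor) (x : Q2) : Q2 :=
  match excluded_middle_informative (isQ2 (g (proj1_sig x))) with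
  | left p => exist _ (g (proj1_sig x)) p
  | right _ => x
  end.

Section Coc.
Variable L : zmodType.

Definition cochain := (cantor -> cantor) -> Q2 -> L.

Definition twist (v : cantor -> cantor) (f : Q2 -> L) : Q2 -> L :=
  fun x => f (actQ (vinv v) x).

(* Coc: c_{vw} = c_v . c_w^v for v, w in V; c is only defined on V, so we
   normalise c_v = 0 for v outside V. *)
Definition Coc (c : cochain) : Prop :=
  (forall v w, inV v -> inV w -> c (v \o w) = (fun x => c v x + twist v (c w) x))
  /\ (forall v, ~ inV v -> c v = (fun _ => 0)).

Definition cadd (c d : cochain) : cochain := fun v x => c v x + d v x.
Definition copp (c : cochain) : cochain := fun v x => - c v x.
Definition czero : cochain := fun _ _ => 0.

Definition s (zeta : L) : cochain := fun v x =>
  if excluded_middle_informative (inV v)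
  then zeta *~ logslope v (proj1_sig (actQ (vinv v) x))
  else 0.

Definition rep (c : cochain) (zeta : L) (f : Q2 -> L) : Prop :=
  forall v, inV v -> c v = (fun x => s zeta v x + f x - twist v f x).

(* equality in L x (prod_{Q_2} L)/L, L embedded as constant maps *)
Definition eqmod (p q : L * (Q2 -> L)) : Prop :=
  p.1 = q.1 /\ exists a : L, q.2 = (fun x => p.2 x + a).

Definition padd (p q : L * (Q2 -> L)) : L * (Q2 -> L) :=
  (p.1 + q.1, fun x => p.2 x + q.2 x).

End Coc.

(* Main.v *)
Require Import Defs.
From mathcomp Require Import all_boot all_order all_algebra.
From Stdlib Require Import ClassicalEpsilon FunctionalExtensionality ProofIrrelevance Classical.
Unset Implicit Arguments. Unset Printing Implicit Defensive.

Definition word := seq bool.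

Lemma inCylP (a : word) x : inCyl a x <-> mkseq x (size a) = a.
Proof.
split.
- move=> H; apply: (@eq_from_nth _ false); first by rewrite size_mkseq.
  by move=> i; rewrite size_mkseq => Hi; rewrite nth_mkseq // H.
- move=> <- i; rewrite size_mkseq => Hi; by rewrite nth_mkseq.
Qed.

Definition pre (a : word) (x : cantor) : bool := mkseq x (size a) == a.

Lemma preP a x : reflect (inCyl a x) (pre a x).
Proof. apply: (iffP eqP); by move/inCylP. Qed.

Definition shift (x : cantor) (n : nat) : cantor := fun i => x (i + n)%N.

Lemma inCyl_prepend a y : inCyl a (prepend a y).
Proof. by move=> i Hi; rewrite /prepend Hi. Qed.

Lemma pre_prepend a y : pre a (prepend a y).
Proof. by apply/preP; apply: inCyl_prepend. Qed.

Lemma shift_prepend a y : shift (prepend a y) (size a) = y.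
Proof.
apply: functional_extensionality => i; rewrite /shift /prepend.
by rewrite ltnNge leq_addl /= addnK.
Qed.

Lemma prepend_shift {a x} : inCyl a x -> prepend a (shift x (size a)) = x.
Proof.
move=> H; apply: functional_extensionality => i; rewrite /shift /prepend.
case: ltnP => Hi; first by rewrite H.
by rewrite subnK.
Qed.

Lemma prepend_nil y : prepend [::] y = y.
Proof. apply: functional_extensionality => i; by rewrite /prepend /= subn0. Qed.

Lemma prependA a b y : prepend (a ++ b) y = prepend a (prepend b y).
Proof.
apply: functional_extensionality => i; rewrite /prepend size_cat nth_cat.
case: (ltnP i (size a)) => H1.
  by rewrite (leq_trans H1) // leq_addr.
by rewrite ltn_subLR // subnDA.
Qed.

Lemma prepend_inj {a y y'} : prepend a y = prepend a y' -> y = y'.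
Proof. move=> H; by rewrite -(shift_prepend a y) H shift_prepend. Qed.

Definition zs : cantor := fun _ => false.

Lemma prepend_injw {a b : word} : (forall y, prepend a y = prepend b y) -> a = b.
Proof.
move=> H.
have Hs : size a = size b.
  wlog Hab : a b H / (size a < size b)%N.
    move=> W; case: (ltngtP (size a) (size b)) => // h.
      by apply: W.
    by apply/esym/W => // y; rewrite H.
  pose y : cantor := fun _ => ~~ nth false b (size a).
  have := congr1 (fun f => f (size a)) (H y).
  by rewrite /prepend ltnn Hab subnn /y; case: (nth false b (size a)).
apply: (@eq_from_nth _ false) => // i Hi.
have := congr1 (fun f => f i) (H zs).
by rewrite /prepend Hi -Hs Hi.
Qed.

Definition disj (a b : word) := ~~ prefix a b && ~~ prefix b a.

Lemma prefix_mkseq (x : cantor) {m n} : (m <= n)%N -> prefix (mkseq x m) (mkseq x n).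
Proof.
move=> H; rewrite prefixE size_mkseq; apply/eqP.
apply: (@eq_from_nth _ false); first by rewrite size_takel // size_mkseq.
move=> i; rewrite size_takel ?size_mkseq // => Hi.
by rewrite nth_take // !nth_mkseq // (leq_trans Hi).
Qed.

Lemma cyl_comp {a b x} : inCyl a x -> inCyl b x -> prefix a b || prefix b a.
Proof.
move=> /inCylP Ea /inCylP Eb.
case: (leqP (size a) (size b)) => H.
  by have := prefix_mkseq x H; rewrite Ea Eb => ->.
by have := prefix_mkseq x (ltnW H); rewrite Ea Eb => ->; rewrite orbT.
Qed.

Lemma disj_cyl {a b x} : disj a b -> inCyl a x -> inCyl b x -> False.
Proof. by move=> /andP[H1 H2] Ha Hb; move: (cyl_comp Ha Hb); rewrite (negbTE H1) (negbTE H2). Qed.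

Lemma disjC a b : disj a b = disj b a.
Proof. by rewrite /disj andbC. Qed.

Lemma inCyl_prefix {a b x} : prefix a b -> inCyl b x -> inCyl a x.
Proof.
move=> /prefixP[r ->] H i Hi; rewrite H ?nth_cat ?Hi // size_cat.
by rewrite (leq_trans Hi) // leq_addr.
Qed.

Lemma inCyl_cat a r y : inCyl (a ++ r) (prepend a y) <-> inCyl r y.
Proof.
split=> H i Hi.
  have := H (size a + i)%N; rewrite size_cat ltn_add2l nth_cat => /(_ Hi).
  rewrite /prepend !ltnNge !leq_addr /= addKn; by [].
rewrite /prepend nth_cat; case: ltnP => // h.
by rewrite H // -(ltn_add2l (size a)) subnKC // -size_cat.
Qed.

Lemma pre_comm {a b c : word} : prefix a c -> prefix b c -> prefix a b || prefix b a.
Proof.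
move=> Ha Hb; apply: (@cyl_comp _ _ (prepend c zs)).
  exact: inCyl_prefix Ha (inCyl_prepend c zs).
exact: inCyl_prefix Hb (inCyl_prepend c zs).
Qed.

Lemma disj_ext {a b} r s : disj a b -> disj (a ++ r) (b ++ s).
Proof.
move=> /andP[H1 H2]; apply/andP; split; apply/negP => H.
- have := pre_comm (prefix_trans (prefix_prefix a r) H) (prefix_prefix b s).
  by rewrite (negbTE H1) (negbTE H2).
- have := pre_comm (prefix_trans (prefix_prefix b s) H) (prefix_prefix a r).
  by rewrite (negbTE H1) (negbTE H2).
Qed.

Lemma disj_extl {a b} r : disj a b -> disj (a ++ r) b.
Proof. by move=> H; have := disj_ext r [::] H; rewrite cats0. Qed.
Lemma disj_extr {a b} r : disj a b -> disj a (b ++ r).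
Proof. by move=> H; have := disj_ext [::] r H; rewrite cats0. Qed.

Lemma ndisj_common {a b} : ~~ disj a b -> exists x, inCyl a x /\ inCyl b x.
Proof.
rewrite /disj negb_and !negbK => /orP[H|H].
  exists (prepend b zs); split; last exact: inCyl_prepend.
  exact: inCyl_prefix H (inCyl_prepend _ _).
exists (prepend a zs); split; first exact: inCyl_prepend.
exact: inCyl_prefix H (inCyl_prepend _ _).
Qed.

Lemma disj_prepend {a b} y : disj a b -> ~ inCyl b (prepend a y).
Proof. move=> H Hb; exact: disj_cyl H (inCyl_prepend a y) Hb. Qed.

Lemma pre_prepend_disj {a b} y : disj a b -> pre b (prepend a y) = false.
Proof. by move=> H; apply/negP => /preP; apply: disj_prepend H. Qed.

Definition part (P : seq word) :=
  (forall x, exists2 m, m \in P & inCyl m x) /\ uniq P /\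
  (forall a b, a \in P -> b \in P -> a != b -> disj a b).

Lemma part_eq {P a b x} : part P -> a \in P -> b \in P -> inCyl a x -> inCyl b x -> a = b.
Proof.
move=> [_ [_ HD]] Ha Hb Hax Hbx; apply/eqP; apply/negPn/negP => Hn.
exact: disj_cyl (HD _ _ Ha Hb Hn) Hax Hbx.
Qed.

Lemma isPartition_part {ms} : isPartition ms -> part ms.
Proof.
move=> H.
have Hinj : forall k l, (k < size ms)%N -> (l < size ms)%N -> forall x,
   inCyl (nth [::] ms k) x -> inCyl (nth [::] ms l) x -> k = l.
  move=> k l Hk Hl x Hkx Hlx; have [k0 [_ U]] := H x.
  by rewrite -(U k) ?(U l).
split; [|split].
- move=> x; have [k [[Hk Hx] _]] := H x; exists (nth [::] ms k) => //.
  exact: mem_nth.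
- apply/(uniqP [::]) => k l; rewrite !inE => Hk Hl E.
  apply: (Hinj k l Hk Hl (prepend (nth [::] ms k) zs)); first exact: inCyl_prepend.
  by rewrite -E; apply: inCyl_prepend.
- move=> a b /(nthP [::])[k Hk <-] /(nthP [::])[l Hl <-] Hne.
  case Hd : (disj _ _) => //; have [x [H1 H2]] := ndisj_common (negbT Hd).
  by move: Hne; rewrite (Hinj k l Hk Hl x H1 H2) eqxx.
Qed.

Lemma part_isPartition {ms} : part ms -> isPartition ms.
Proof.
move=> HP x; have [m Hm Hx] := HP.1 x.
exists (index m ms); split.
  by split; [rewrite index_mem | rewrite nth_index].
move=> l [Hl Hlx]; have E := part_eq HP Hm (mem_nth [::] Hl) Hx Hlx.
by rewrite E index_uniq //; case: HP => _ [].
Qed.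

Definition bij (v : cantor -> cantor) := injective v /\ (forall y, exists x, v x = y).

Lemma vinvK {v} : bij v -> forall y, v (vinv v y) = y.
Proof.
move=> [_ Hs] y; rewrite /vinv; apply: (@epsilon_spec _ (inhabits y) (fun x => v x = y)).
exact: Hs.
Qed.

Lemma vinvK' {v} : bij v -> forall x, vinv v (v x) = x.
Proof. move=> H x; apply: H.1; by rewrite vinvK. Qed.

Lemma bij_o {v w} : bij v -> bij w -> bij (v \o w).
Proof.
move=> [Iv Sv] [Iw Sw]; split; first by move=> x y /Iv /Iw.
move=> y; have [x1 <-] := Sv y; have [x2 <-] := Sw x1; by exists x2.
Qed.

Lemma bij_idf : bij (fun x => x).
Proof. by split=> // y; exists y. Qed.

Lemma vinv_comp {v w} : bij v -> bij w -> forall y, vinv (v \o w) y = vinv w (vinv v y).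
Proof.
move=> Hv Hw y; have Hc := bij_o Hv Hw.
apply: Hc.1; by rewrite vinvK //= !vinvK.
Qed.

Definition loc (v : cantor -> cantor) := forall x, exists m m' : word,
  inCyl m x /\ forall y, v (prepend m y) = prepend m' y.

Definition cylmap (v : cantor -> cantor) (a : word) :=
  exists a' : word, forall y, v (prepend a y) = prepend a' y.

Lemma PL {v : cantor -> cantor} {P : seq word} :
  part P -> bij v -> (forall a, a \in P -> cylmap v a) -> inV v.
Proof.
move=> HP Hbij Hc.
pose img a := epsilon (inhabits [::]) (fun a' : word => forall y, v (prepend a y) = prepend a' y).
have Himg : forall a, a \in P -> forall y, v (prepend a y) = prepend (img a) y.
  move=> a Ha; rewrite /img; apply: (@epsilon_spec _ (inhabits [::]) (fun a' : word => forall y, v (prepend a y) = prepend a' y)).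
  exact: Hc.
have Hdom : forall a b t t', a \in P -> b \in P ->
     prepend (img a) t = prepend (img b) t' -> a = b.
  move=> a b t t' Ha Hb E.
  have E2 : prepend a t = prepend b t' by apply: Hbij.1; rewrite !Himg.
  apply: (part_eq HP Ha Hb (inCyl_prepend a t)); rewrite E2; exact: inCyl_prepend.
exists [seq (a, img a) | a <- P]; split; [|split].
- apply: part_isPartition; suff -> : [seq x.1 | x <- [seq (a, img a) | a <- P]] = P by [].
  by elim: (P) => //= a l ->.
- apply: part_isPartition.
  have -> : [seq x.2 | x <- [seq (a, img a) | a <- P]] = map img P by elim: (P) => //= a l ->.
  split; [|split].
  + move=> x; have [p Hp] := Hbij.2 x; have [a Ha Hpa] := HP.1 p.
    exists (img a); first exact: map_f.
    by rewrite -Hp -(prepend_shift Hpa) Himg //; apply: inCyl_prepend.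
  + rewrite map_inj_in_uniq; first by case: HP => _ [].
    move=> a b Ha Hb E; apply: (Hdom a b zs zs) => //; by rewrite E.
  + move=> a' b' /mapP[a Ha ->] /mapP[b Hb ->] Hne.
    case Hd : (disj _ _) => //; have [x [H1 H2]] := ndisj_common (negbT Hd).
    move: Hne; rewrite (Hdom a b (shift x (size (img a))) (shift x (size (img b)))) ?eqxx //.
    by rewrite !prepend_shift.
- move=> k; rewrite size_map => Hk y.
  rewrite (nth_map [::]) //=; apply: Himg; exact: mem_nth.
Qed.

Lemma V_part {v} : inV v -> exists P, part P /\ forall a, a \in P -> cylmap v a.
Proof.
move=> [ps [H1 [H2 H3]]]; exists (map fst ps); split; first exact: isPartition_part.
move=> a /(nthP [::]) [k]; rewrite size_map => Hk <-.
exists (nth ([::],[::]) ps k).2 => y; rewrite (nth_map ([::],[::])) //; exact: H3.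
Qed.

Lemma V_bij {v} : inV v -> bij v.
Proof.
move=> [ps [H1 [H2 H3]]].
have Hcov : forall x, exists k, (k < size ps)%N /\ x = prepend (nth ([::],[::]) ps k).1 (shift x (size (nth ([::],[::]) ps k).1)).
  move=> x; have [k [[Hk Hx] _]] := H1 x; rewrite size_map in Hk.
  exists k; split => //; rewrite (nth_map ([::],[::])) // in Hx.
  by rewrite prepend_shift.
split.
- move=> x x' E.
  have [k [Hk Ek]] := Hcov x; have [l [Hl El]] := Hcov x'.
  move: E; rewrite Ek El !H3 // => E.
  have Hkl : k = l.
    have [j [_ U]] := H2 (prepend (nth ([::],[::]) ps k).2 (shift x (size (nth ([::], [::]) ps k).1))).
    rewrite -(U k) ?(U l) //; rewrite size_map (nth_map ([::],[::])) //.
      by rewrite E; split => //; apply: inCyl_prepend.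
    by split => //; apply: inCyl_prepend.
  subst l; by rewrite Ek El (prepend_inj E).
- move=> y; have [k [[Hk Hy] _]] := H2 y; rewrite size_map in Hk.
  rewrite (nth_map ([::],[::])) // in Hy.
  exists (prepend (nth ([::],[::]) ps k).1 (shift y (size (nth ([::],[::]) ps k).2))).
  by rewrite H3 // prepend_shift.
Qed.

Lemma V_loc {v} : inV v -> loc v.
Proof.
move=> HV x; have [P [HP Hc]] := V_part HV; have [m Hm Hx] := HP.1 x.
have [m' Hm'] := Hc m Hm; by exists m, m'.
Qed.

From mathcomp Require Import all_boot all_order all_algebra.
From mathcomp Require Import zify.
From Stdlib Require Import ClassicalEpsilon FunctionalExtensionality ProofIrrelevance Classical.
Unset Implicit Arguments. Unset Printing Implicit Defensive.

Fixpoint words n : seq word :=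
  if n is n'.+1 then map (cons false) (words n') ++ map (cons true) (words n') else [:: [::]].

Lemma mem_words n (a : word) : (a \in words n) = (size a == n).
Proof.
elim: n a => [|n IH] a.
  by case: a => [|b a] //=; rewrite inE.
rewrite /= mem_cat; case: a => [|b a] /=.
  by apply/negbTE/negP => /orP[] /mapP[c _].
rewrite eqSS -IH; case: b.
  apply/idP/idP; last by move=> H; apply/orP; right; apply: map_f.
  by case/orP => /mapP[c Hc [E]] //; rewrite E.
apply/idP/idP; last by move=> H; apply/orP; left; apply: map_f.
by case/orP => /mapP[c Hc [E]] //; rewrite E.
Qed.

Lemma uniq_words n : uniq (words n).
Proof.
elim: n => //= n IH; rewrite cat_uniq !map_inj_uniq //; try by move=> x y [].
rewrite IH /= andbT; apply/hasPn => a /mapP[c _ ->]; by apply/negP => /mapP[d _ ].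
Qed.

Lemma cyl_comp_le {a b x} : inCyl a x -> inCyl b x -> (size a <= size b)%N -> prefix a b.
Proof.
move=> /inCylP Ea /inCylP Eb H; by have := prefix_mkseq x H; rewrite Ea Eb.
Qed.

Lemma prefix_same_size {a b : word} : prefix a b -> size a = size b -> a = b.
Proof.
move=> /prefixP[r ->]; rewrite size_cat => /eqP; rewrite -{1}(addn0 (size a)) eqn_add2l => /eqP H.
have -> : r = [::] by apply: size0nil; rewrite -H.
by rewrite cats0.
Qed.

Lemma part_words n : part (words n).
Proof.
split; [|split].
- move=> x; exists (mkseq x n); first by rewrite mem_words size_mkseq.
  by apply/inCylP; rewrite size_mkseq.
- exact: uniq_words.
- move=> a b; rewrite !mem_words => /eqP Ha /eqP Hb Hne; apply/andP; split; apply/negP => H.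
    by move: Hne; rewrite (prefix_same_size H) ?eqxx // Ha Hb.
  by move: Hne; rewrite (prefix_same_size H) ?eqxx // Ha Hb.
Qed.

Lemma fan (good : word -> Prop) :
  (forall a b, good a -> good (rcons a b)) -> (forall x, exists n, good (mkseq x n)) ->
  exists N, forall a, size a = N -> good a.
Proof.
move=> Hext Hloc.
have Gext : forall a r, good a -> good (a ++ r).
  move=> a r Ha; elim/last_ind: r => [|r b IH]; first by rewrite cats0.
  by rewrite -rcons_cat; apply: Hext.
apply: NNPP => Hno.
pose B a := forall N, exists r : word, size r = N /\ ~ good (a ++ r).
have B0 : B [::].
  move=> N; apply: NNPP => H; apply: Hno; exists N => a Ha; apply: NNPP => Hg.
  by apply: H; exists a.
have Bstep : forall a, B a -> B (rcons a false) \/ B (rcons a true).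
  move=> a Ba; apply: NNPP => /not_or_and [H0 H1].
  have [N0 HN0] : exists N, forall r : word, size r = N -> good (rcons a false ++ r).
    apply: NNPP => H; apply: H0 => N; apply: NNPP => H'; apply: H; exists N => r Hr.
    by apply: NNPP => Hg; apply: H'; exists r.
  have [N1 HN1] : exists N, forall r : word, size r = N -> good (rcons a true ++ r).
    apply: NNPP => H; apply: H1 => N; apply: NNPP => H'; apply: H; exists N => r Hr.
    by apply: NNPP => Hg; apply: H'; exists r.
  have [r [Hr Hg]] := Ba (maxn N0 N1).+1.
  case: r Hr Hg => [|b r] //= [Hr]; rewrite -cat_rcons => Hg; apply: Hg.
  have Hb : forall c, (c <= size r)%N -> good (rcons a b ++ take c r) -> good (rcons a b ++ r).
    by move=> c _ H; rewrite -(cat_take_drop c r) catA; apply: Gext.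
  case: b Hb => Hb.
    apply: (Hb N1); first by rewrite Hr leq_maxr.
    apply: HN1; rewrite size_takel // Hr leq_maxr //.
  apply: (Hb N0); first by rewrite Hr leq_maxl.
  apply: HN0; rewrite size_takel // Hr leq_maxl //.
pose nb a : bool := if excluded_middle_informative (B (rcons a false)) then false else true.
have HnB : forall a, B a -> B (rcons a (nb a)).
  move=> a Ba; rewrite /nb; case: excluded_middle_informative => // H.
  by case: (Bstep a Ba).
pose fix pth n : word := if n is n'.+1 then rcons (pth n') (nb (pth n')) else [::].
have Bp : forall n, B (pth n) by elim=> //= n IH; apply: HnB.
have Sp : forall n, size (pth n) = n by elim=> //= n IH; rewrite size_rcons IH.
pose x : cantor := fun i => nth false (pth i.+1) i.
have Ex : forall n, mkseq x n = pth n.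
  elim=> // n IH; rewrite -addn1 /mkseq iotaD map_cat /= -/(mkseq x n) IH add0n cats1 /=.
  rewrite /x /= nth_rcons Sp ltnn eqxx.
  by rewrite addn1.
have [n Hn] := Hloc x; have [r [Hr Hg]] := Bp n 0.
by move/size0nil: Hr => Hr; apply: Hg; rewrite Hr cats0 -Ex.
Qed.

Lemma LG {v} : bij v -> loc v -> inV v.
Proof.
move=> Hb Hl.
have [N HN] : exists N, forall a : word, size a = N -> cylmap v a.
  apply: fan.
    move=> a b [a' Ha]; exists (rcons a' b) => y.
    by rewrite -!cats1 !prependA Ha.
  move=> x; have [m [m' [Hm Hv]]] := Hl x; exists (size m).
  by move/inCylP: Hm => ->; exists m'.
apply: (PL (part_words N) Hb) => a; rewrite mem_words => /eqP; exact: HN.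
Qed.

Lemma comp_piece {v w : cantor -> cantor} {x n n' m m'} :
  inCyl n x -> (forall y, w (prepend n y) = prepend n' y) ->
  inCyl m (w x) -> (forall y, v (prepend m y) = prepend m' y) ->
  exists r r'' : word, inCyl (n ++ r) x /\
     (forall y, v (w (prepend (n ++ r) y)) = prepend (m' ++ r'') y) /\
     (size n' + size r = size m + size r'')%N.
Proof.
move=> Hn Hw Hm Hv.
set t := shift x (size n).
have Ex : x = prepend n t by rewrite prepend_shift.
pose r := mkseq t (size m).
have Hr : inCyl r t by apply/inCylP; rewrite size_mkseq.
have Hwx : w x = prepend n' t by rewrite Ex Hw.
have Hpre : prefix m (n' ++ r).
  apply: (cyl_comp_le Hm); first by rewrite Hwx; apply/inCyl_cat.
  by rewrite size_cat size_mkseq leq_addl.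
case/prefixP: Hpre => r'' Er.
exists r, r''; split; [|split].
- by rewrite Ex; apply/inCyl_cat.
- by move=> y; rewrite prependA Hw -prependA Er (prependA m r'') Hv -prependA.
- by rewrite -size_cat Er size_cat.
Qed.

Lemma loc_comp {v w} : loc v -> loc w -> loc (v \o w).
Proof.
move=> Lv Lw x; have [n [n' [Hn Hw]]] := Lw x; have [m [m' [Hm Hv]]] := Lv (w x).
have [r [r'' [H1 [H2 _]]]] := comp_piece Hn Hw Hm Hv.
by exists (n ++ r), (m' ++ r'').
Qed.

Lemma V_comp {v w} : inV v -> inV w -> inV (v \o w).
Proof.
move=> Hv Hw; exact: (LG (bij_o (V_bij Hv) (V_bij Hw)) (loc_comp (V_loc Hv) (V_loc Hw))).
Qed.

Lemma V_id : inV (fun x => x).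
Proof.
apply: (LG bij_idf) => x; exists [::], [::]; split; first by move=> i.
by move=> y.
Qed.

Lemma Q2_prepend a y : isQ2 (prepend a y) <-> isQ2 y.
Proof.
split=> [[N HN]|[N HN]].
  exists N => n Hn; have := HN (n + size a)%N.
  rewrite /prepend ltnNge leq_addl /= addnK; apply; lia.
exists (N + size a)%N => n Hn.
have H1 : (size a <= n)%N by lia.
rewrite /prepend ltnNge H1 /=; apply: HN; lia.
Qed.

Lemma Q2_shift x n : isQ2 x -> isQ2 (shift x n).
Proof. move=> [N HN]; exists N => i Hi; apply: HN; lia. Qed.

Lemma loc_Q2 {v x} : loc v -> isQ2 x -> isQ2 (v x).
Proof.
move=> Hl Hx; have [m [m' [Hm Hv]]] := Hl x.
rewrite -(prepend_shift Hm) Hv; apply/Q2_prepend; exact: Q2_shift.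
Qed.

Lemma loc_Q2inv {v y} : bij v -> loc v -> isQ2 y -> isQ2 (vinv v y).
Proof.
move=> Hb Hl Hy; set x := vinv v y; have [m [m' [Hm Hv]]] := Hl x.
have E : y = prepend m' (shift x (size m)) by rewrite -Hv prepend_shift // /x vinvK.
rewrite -(prepend_shift Hm); apply/Q2_prepend; rewrite E in Hy; exact: (proj1 (Q2_prepend _ _) Hy).
Qed.

Lemma Q2eq (x y : Q2) : proj1_sig x = proj1_sig y -> x = y.
Proof.
case: x => x hx; case: y => y hy /= E; subst y; f_equal; apply: proof_irrelevance.
Qed.

Lemma actQ_val g (x : Q2) : isQ2 (g (proj1_sig x)) -> proj1_sig (actQ g x) = g (proj1_sig x).
Proof. rewrite /actQ; by case: excluded_middle_informative. Qed.

Lemma actQ_V {v} (x : Q2) : inV v -> proj1_sig (actQ v x) = v (proj1_sig x).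
Proof. move=> Hv; apply: actQ_val; apply: loc_Q2 (V_loc Hv) (proj2_sig x). Qed.

Lemma actQ_Vinv {v} (x : Q2) : inV v -> proj1_sig (actQ (vinv v) x) = vinv v (proj1_sig x).
Proof. move=> Hv; apply: actQ_val; apply: loc_Q2inv (V_bij Hv) (V_loc Hv) (proj2_sig x). Qed.

Definition tr (a b : word) (x : cantor) : cantor :=
  if pre a x then prepend b (shift x (size a))
  else if pre b x then prepend a (shift x (size b)) else x.

Lemma tr_a a b y : tr a b (prepend a y) = prepend b y.
Proof. by rewrite /tr pre_prepend shift_prepend. Qed.

Lemma tr_b {a b} y : disj a b -> tr a b (prepend b y) = prepend a y.
Proof.
move=> H; have H' : disj b a by rewrite disjC.
by rewrite /tr (pre_prepend_disj y H') pre_prepend shift_prepend.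
Qed.

Lemma tr_out {a b x} : ~ inCyl a x -> ~ inCyl b x -> tr a b x = x.
Proof.
move=> Ha Hb; rewrite /tr; case: preP => // _; by case: preP.
Qed.

Lemma cyl_cases a b x : disj a b ->
  (exists t, x = prepend a t) \/ (exists t, x = prepend b t) \/ (~ inCyl a x /\ ~ inCyl b x).
Proof.
move=> H; case: (preP a x) => Ha.
  by left; exists (shift x (size a)); rewrite prepend_shift.
case: (preP b x) => Hb.
  by right; left; exists (shift x (size b)); rewrite prepend_shift.
by right; right.
Qed.

Lemma tr_invol {a b} x : disj a b -> tr a b (tr a b x) = x.
Proof.
move=> H; case: (cyl_cases a b x H) => [[t ->]|[[t ->]|[Ha Hb]]].
- by rewrite tr_a tr_b.
- by rewrite tr_b // tr_a.
- by rewrite !(tr_out Ha Hb).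
Qed.

Lemma tr_sym {a b} : disj a b -> tr a b = tr b a.
Proof.
move=> H; have H' : disj b a by rewrite disjC.
apply: functional_extensionality => x.
case: (cyl_cases a b x H) => [[t ->]|[[t ->]|[Ha Hb]]].
- by rewrite tr_a tr_b.
- by rewrite tr_b // tr_a.
- by rewrite (tr_out Ha Hb) (tr_out Hb Ha).
Qed.

Lemma tr_bij {a b} : disj a b -> bij (tr a b).
Proof.
move=> H; split.
  by move=> x y E; rewrite -(tr_invol x H) E tr_invol.
by move=> y; exists (tr a b y); rewrite tr_invol.
Qed.

Lemma notcyl_nbhd {a x} : ~ inCyl a x -> forall n, (size a <= n)%N -> forall y, ~ inCyl a (prepend (mkseq x n) y).
Proof.
move=> Ha n Hn y H; apply: Ha.
have Hm : inCyl (mkseq x n) x by apply/inCylP; rewrite size_mkseq.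
have Hp : prefix a (mkseq x n).
  by apply: (cyl_comp_le H (inCyl_prepend _ y)); rewrite size_mkseq.
exact: inCyl_prefix Hp Hm.
Qed.

Lemma tr_loc {a b} : disj a b -> loc (tr a b).
Proof.
move=> H x; case: (cyl_cases a b x H) => [[t ->]|[[t ->]|[Ha Hb]]].
- exists a, b; split; first exact: inCyl_prepend.
  by move=> y; rewrite tr_a.
- exists b, a; split; first exact: inCyl_prepend.
  by move=> y; rewrite tr_b.
- exists (mkseq x (size a + size b)), (mkseq x (size a + size b)); split.
    by apply/inCylP; rewrite size_mkseq.
  move=> y; apply: tr_out; apply: notcyl_nbhd => //; lia.
Qed.

Lemma tr_V {a b} : disj a b -> inV (tr a b).
Proof. move=> H; exact: (LG (tr_bij H) (tr_loc H)). Qed.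

Lemma vinv_tr {a b} : disj a b -> vinv (tr a b) = tr a b.
Proof.
move=> H; apply: functional_extensionality => y.
apply: (tr_bij H).1; by rewrite vinvK ?tr_invol //; apply: tr_bij.
Qed.

Lemma ls_uniq {v x m1 m1' m2 m2'} :
  inCyl m1 x -> (forall y, v (prepend m1 y) = prepend m1' y) ->
  inCyl m2 x -> (forall y, v (prepend m2 y) = prepend m2' y) ->
  ((size m1)%:Z - (size m1')%:Z = (size m2)%:Z - (size m2')%:Z)%R.
Proof.
wlog Hle : m1 m1' m2 m2' / (size m1 <= size m2)%N.
  move=> W H1 H1' H2 H2'; case: (leqP (size m1) (size m2)) => h.
    exact: W.
  by apply/esym/W => //; apply: ltnW.
move=> H1 H1' H2 H2'.
have := cyl_comp_le H1 H2 Hle; case/prefixP => r Er.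
have E : m2' = m1' ++ r.
  apply: prepend_injw => y; by rewrite -H2' Er (prependA m1 r) H1' prependA.
rewrite Er E !size_cat; lia.
Qed.

Lemma ls_spec {v x m m'} : inCyl m x -> (forall y, v (prepend m y) = prepend m' y) ->
  logslope v x = ((size m)%:Z - (size m')%:Z)%R.
Proof.
move=> Hm Hv; rewrite /logslope.
have := @epsilon_spec _ (inhabits 0%R) (fun k : int => exists m m' : seq bool,
    inCyl m x /\ (forall y, v (prepend m y) = prepend m' y) /\
    k = ((size m)%:Z - (size m')%:Z)%R).
case.
  by exists ((size m)%:Z - (size m')%:Z)%R, m, m'.
move=> m1 [m1' [H1 [H1' ->]]]; exact: ls_uniq H1 H1' Hm Hv.
Qed.

Lemma ls_comp {v w} x : loc v -> loc w ->
  logslope (v \o w) x = (logslope v (w x) + logslope w x)%R.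
Proof.
move=> Lv Lw; have [n [n' [Hn Hw]]] := Lw x; have [m [m' [Hm Hv]]] := Lv (w x).
have [r [r'' [H1 [H2 H3]]]] := comp_piece Hn Hw Hm Hv.
rewrite (ls_spec H1 H2) (ls_spec Hm Hv) (ls_spec Hn Hw) !size_cat; lia.
Qed.

From mathcomp Require Import all_boot all_order all_algebra.
From mathcomp Require Import zify.
From Stdlib Require Import ClassicalEpsilon FunctionalExtensionality ProofIrrelevance Classical.
Unset Implicit Arguments. Unset Printing Implicit Defensive.
Import GRing.Theory.

Lemma prefix_rcons_cases {c h : word} {b} : prefix c (rcons h b) -> c = rcons h b \/ prefix c h.
Proof.
move=> H; case: (leqP (size c) (size h)) => Hs.
  right; move: H; rewrite !prefixE -cats1 takel_cat //.
left; apply: prefix_same_size => //; have := size_prefix H; rewrite size_rcons.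
by move=> H2; apply/eqP; rewrite eqn_leq H2.
Qed.

Lemma disj_sib (h : word) b : disj (rcons h b) (rcons h (~~ b)).
Proof.
apply/andP; split; apply/negP => H; have := prefix_same_size H; rewrite !size_rcons => /(_ erefl);
  move/(congr1 (fun s => last false s)); rewrite !last_rcons; by case: (b) H.
Qed.

Lemma split1w (e : word) y : prepend e y = prepend (rcons e (y 0%N)) (shift y 1).
Proof.
apply: functional_extensionality => i; rewrite /prepend /shift size_rcons nth_rcons.
case: (ltnP i (size e)) => H1; first by rewrite ltnS ltnW.
case: (ltnP i (size e).+1) => H2.
  have -> : i = size e by lia.
  by rewrite eqxx subnn.
congr y; lia.
Qed.

Lemma prefix_inCyl_prepend {a b : word} y : prefix a b -> inCyl a (prepend b y).
Proof. move=> H; exact: inCyl_prefix H (inCyl_prepend b y). Qed.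

Lemma not_disj {a b : word} : ~~ disj a b -> prefix a b \/ prefix b a.
Proof. by rewrite /disj negb_and !negbK => /orP. Qed.

Lemma disj_nil_l (b : word) : disj [::] b = false.
Proof. by rewrite /disj prefix0s. Qed.

Local Open Scope ring_scope.

Section Gen.
Variable L : zmodType.

Definition cocy (d : cochain L) := forall v w, inV v -> inV w ->
  d (v \o w) = (fun x => d v x + twist v (d w) x).

Lemma actQ_inv {v} (x : Q2) : inV v -> actQ (vinv v) (actQ v x) = x.
Proof.
move=> Hv; apply: Q2eq; rewrite actQ_Vinv // actQ_V // vinvK' //; exact: V_bij.
Qed.

Lemma twist_id (f : Q2 -> L) : twist (fun x => x) f = f.
Proof.
apply: functional_extensionality => x; rewrite /twist; congr f; apply: Q2eq.
rewrite actQ_Vinv; last exact: V_id.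
exact: (vinvK bij_idf (proj1_sig x)).
Qed.

Lemma twist_zero {t} (g : Q2 -> L) : inV t -> twist t g = (fun _ => 0) -> g = (fun _ => 0).
Proof.
move=> Ht E; apply: functional_extensionality => x.
by have := congr1 (fun f => f (actQ t x)) E; rewrite /twist actQ_inv.
Qed.

Lemma cocy_id d : cocy d -> d (fun x => x) = (fun _ => 0).
Proof.
move=> Hd; have := Hd _ _ V_id V_id.
change ((fun x : cantor => x) \o (fun x : cantor => x)) with (fun x : cantor => x).
rewrite twist_id => E; apply: functional_extensionality => x.
have := congr1 (fun f => f x) E => /= H1.
have := congr1 (fun z => z - d (fun x => x) x) H1; by rewrite subrr addrK => <-.
Qed.

Lemma img_disj {P v a b a' b'} : part P -> bij v -> a \in P -> b \in P -> a != b ->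
  (forall y, v (prepend a y) = prepend a' y) -> (forall y, v (prepend b y) = prepend b' y) ->
  disj a' b'.
Proof.
move=> HP Hb Ha HbP Hne Ea Eb; case Hd : (disj a' b') => //.
have [x [H1 H2]] := ndisj_common (negbT Hd).
have E : prepend a (shift x (size a')) = prepend b (shift x (size b')).
  apply: Hb.1; by rewrite Ea Eb !prepend_shift.
have := part_eq HP Ha HbP (inCyl_prepend a (shift x (size a'))).
by rewrite E => /(_ (inCyl_prepend _ _)) Eab; move: Hne; rewrite Eab eqxx.
Qed.

Lemma max_elem (P : seq word) : P != [::] -> exists2 a, a \in P & forall b, b \in P -> (size b <= size a)%N.
Proof.
elim: P => // a P IH _; case: (altP (P =P [::])) => [->|HP].
  by exists a; rewrite ?inE // => b; rewrite inE => /eqP ->.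
have [c Hc Hm] := IH HP; case: (leqP (size a) (size c)) => H.
  exists c; first by rewrite inE Hc orbT.
  by move=> b; rewrite inE => /orP[/eqP ->|/Hm].
exists a; first by rewrite inE eqxx.
move=> b; rewrite inE => /orP[/eqP ->//|/Hm Hb]; exact: leq_trans Hb (ltnW H).
Qed.

Lemma SIB {P} : part P -> (2 <= size P)%N -> exists e : word, rcons e false \in P /\ rcons e true \in P.
Proof.
move=> HP Hs.
have [a Ha Hm] : exists2 a, a \in P & forall b, b \in P -> (size b <= size a)%N.
  by apply: max_elem; case: (P) Hs.
have Hane : a <> [::].
  move=> Ea; have : (size P <= size [:: ([::] : word)])%N.
    apply: uniq_leq_size; first by case: HP => _ [].
    move=> b Hb; rewrite inE; apply/negPn/negP => Hne.
    by move: (HP.2.2 a b Ha Hb); rewrite Ea eq_sym Hne disj_nil_l => /(_ isT).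
  by rewrite /=; lia.
case/lastP: a Ha Hm Hane => [//|e bt] Ha Hm _.
set sib := rcons e (~~ bt).
have [m Hm1 Hm2] := HP.1 (prepend sib zs).
have Hms : m = sib.
  case: (leqP (size m) (size e)) => Hle.
    have Hpe : prefix m e.
      apply: (cyl_comp_le Hm2 _ Hle); apply: prefix_inCyl_prepend; rewrite /sib -cats1; exact: prefix_prefix.
    have Hma : m = rcons e bt.
      apply: (part_eq HP Hm1 Ha (x := prepend (rcons e bt) zs)); last exact: inCyl_prepend.
      apply: prefix_inCyl_prepend; apply: (prefix_trans Hpe); rewrite -cats1; exact: prefix_prefix.
    by move: Hle; rewrite Hma size_rcons ltnn.
  apply: prefix_same_size.
    apply: (cyl_comp_le Hm2 (inCyl_prepend _ _)); have := Hm m Hm1; rewrite !size_rcons //.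
  have := Hm m Hm1; rewrite /sib !size_rcons => H2; apply/eqP; rewrite eqn_leq H2; exact: Hle.
rewrite Hms /sib in Hm1; exists e; by case: (bt) Ha Hm1 => /= Ha Hm1; split.
Qed.

Lemma tr_cylmap {A B c : word} : disj A B -> (prefix A c \/ disj c A) -> (prefix B c \/ disj c B) ->
  cylmap (tr A B) c.
Proof.
move=> HAB [/prefixP[r ->]|HA].
  by move=> _; exists (B ++ r) => y; rewrite !prependA tr_a.
case=> [/prefixP[r ->]|HB].
  by exists (A ++ r) => y; rewrite !prependA tr_b.
exists c => y; apply: tr_out; exact: disj_prepend.
Qed.

Lemma sib_rel {c h : word} {b} : disj c (rcons h b) ->
  prefix (rcons h (~~ b)) c \/ disj c (rcons h (~~ b)).
Proof.
move=> Hd; case Hd' : (disj c (rcons h (~~ b))); first by right.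
case: (not_disj (negbT Hd')) => H; last by left.
case: (prefix_rcons_cases H) => [->|Hc]; first by left; exact: prefix_refl.
move: Hd; rewrite /disj; case/andP => H1 _; move/negP: H1; case.
by apply: (prefix_trans Hc); rewrite -cats1; exact: prefix_prefix.
Qed.

Variable d : cochain L.
Hypothesis Hd : cocy d.
Hypothesis Htr : forall a b, disj a b -> d (tr a b) = (fun _ => 0).

Lemma FINISH v P e t h (o : bool) :
  (forall v' P', (size P' < size P)%N -> part P' -> bij v' -> (forall a, a \in P' -> cylmap v' a) ->
     d v' = (fun _ => 0)) ->
  part P -> bij v -> (forall a, a \in P -> cylmap v a) ->
  rcons e false \in P -> rcons e true \in P ->
  inV t -> d t = (fun _ => 0) ->
  (forall y, t (v (prepend (rcons e false) y)) = prepend (rcons h o) y) ->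
  (forall y, t (v (prepend (rcons e true) y)) = prepend (rcons h (~~ o)) y) ->
  (forall m, m \in P -> m != rcons e false -> m != rcons e true -> cylmap (t \o v) m) ->
  d v = (fun _ => 0).
Proof.
move=> IH HP Hb Hc He0 He1 Ht Hdt Ht0 Ht1 Hoth.
set e0 := rcons e false; set e1 := rcons e true.
have He01 : disj e0 e1 by exact: (disj_sib e false).
have Hne01 : e0 != e1 by apply/negP => /eqP E; move: He01; rewrite E /disj prefix_refl.
pose phi := if o then tr e0 e1 else (fun x => x).
have Hphi : inV phi by rewrite /phi; case: (o); [exact: tr_V | exact: V_id].
have Hdphi : d phi = (fun _ => 0) by rewrite /phi; case: (o); [exact: Htr | exact: cocy_id].
have Hphi0 : forall y, t (v (phi (prepend e0 y))) = prepend (rcons h false) y.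
  move=> y; rewrite /phi; case: (o) Ht0 Ht1 => /= Ht0 Ht1; first by rewrite tr_a Ht1.
  by rewrite Ht0.
have Hphi1 : forall y, t (v (phi (prepend e1 y))) = prepend (rcons h true) y.
  move=> y; rewrite /phi; case: (o) Ht0 Ht1 => /= Ht0 Ht1; first by rewrite tr_b // Ht0.
  by rewrite Ht1.
have HphiM : forall m, m \in P -> m != e0 -> m != e1 -> forall y, phi (prepend m y) = prepend m y.
  move=> m Hm H0 H1 y; rewrite /phi; case: (o) => //; apply: tr_out; apply: disj_prepend.
    by apply: HP.2.2.
  by apply: HP.2.2.
have HV : inV v by exact: PL HP Hb Hc.
have Hvphi : inV (v \o phi) by exact: V_comp HV Hphi.
pose u := t \o (v \o phi).
have Hu : d u = (fun _ => 0).
  have Huniq : uniq P by case: HP => _ [].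
  have HeP : e \notin P.
    apply/negP => HeP; have : disj e e0 by apply: HP.2.2 => //; apply/negP => /eqP E;
      move: (congr1 size E); rewrite /e0 size_rcons => /eqP; rewrite -{1}(addn0 (size e)) -addn1 eqn_add2l.
    by rewrite /disj /e0 -cats1 prefix_prefix.
  pose P' := e :: rem e1 (rem e0 P).
  have HmemP' : forall m, m \in rem e1 (rem e0 P) -> [/\ m \in P, m != e0 & m != e1].
    move=> m; rewrite (mem_rem_uniq _ (rem_uniq _ Huniq)) inE => /andP[H1].
    by rewrite (mem_rem_uniq _ Huniq) inE => /andP[H2 H3].
  apply: (IH u P').
  - rewrite /P' /= size_rem; last by rewrite (mem_rem_uniq _ Huniq) inE eq_sym Hne01.
    rewrite size_rem //.
    have Hs2 : (2 <= size P)%N.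
      have : (size [:: e0; e1] <= size P)%N.
        apply: uniq_leq_size; first by rewrite /= inE Hne01.
        by move=> z; rewrite !inE => /orP[] /eqP ->.
      by [].
    by case: (size P) Hs2 => [|[|k]].
  - split; [|split].
    + move=> x; have [m Hm Hx] := HP.1 x.
      case: (altP (m =P e0)) => [E|H0].
        exists e; first by rewrite inE eqxx.
        by apply: inCyl_prefix Hx; rewrite E /e0 -cats1; exact: prefix_prefix.
      case: (altP (m =P e1)) => [E|H1].
        exists e; first by rewrite inE eqxx.
        by apply: inCyl_prefix Hx; rewrite E /e1 -cats1; exact: prefix_prefix.
      exists m => //; rewrite inE (mem_rem_uniq _ (rem_uniq _ Huniq)) inE H1.
      by rewrite (mem_rem_uniq _ Huniq) inE H0 Hm orbT.
    + rewrite /P' /= rem_uniq ?rem_uniq // andbT; apply/negP => /mem_rem /mem_rem H.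
      by move: HeP; rewrite H.
    + have Hdisj_e : forall m, m \in rem e1 (rem e0 P) -> disj e m.
        move=> m /HmemP'[Hm H0 H1]; case Hdm : (disj e m) => //.
        case: (not_disj (negbT Hdm)) => Hpre.
          case/prefixP: Hpre => r Er; case: r Er => [|b r] Er.
            by move: Hm; rewrite Er cats0 (negbTE HeP).
          have Hpb : prefix (rcons e b) m by rewrite Er -cats1 -(cat1s b r) catA prefix_prefix.
          case: b Er Hpb => Er Hpb.
            by have := HP.2.2 _ _ Hm He1 H1; rewrite /disj Hpb andbF.
          by have := HP.2.2 _ _ Hm He0 H0; rewrite /disj Hpb andbF.
        have := HP.2.2 _ _ Hm He0 H0; rewrite /disj (prefix_trans Hpre) //.
        by rewrite /e0 -cats1; exact: prefix_prefix.
      move=> a b; rewrite !inE => /orP[/eqP->|Ha] /orP[/eqP->|Hb2]; rewrite ?eqxx //.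
      * by move=> _; apply: Hdisj_e.
      * by move=> _; rewrite disjC; apply: Hdisj_e.
      * move=> Hab; have [? ? ?] := HmemP' _ Ha; have [? ? ?] := HmemP' _ Hb2.
        by apply: HP.2.2.
  - apply: bij_o; first exact: V_bij Ht.
    exact: V_bij Hvphi.
  - move=> a; rewrite inE => /orP[/eqP->|Ha].
      exists h => y; rewrite (split1w e y) /u /=.
      rewrite (split1w h y); case: (y 0%N); [exact: Hphi1 | exact: Hphi0].
    have [Hm H0 H1] := HmemP' _ Ha; have [c Hcm] := Hoth a Hm H0 H1.
    by exists c => y; rewrite /u /= HphiM // -Hcm.
have E1 := Hd _ _ Ht Hvphi; have E2 := Hd _ _ HV Hphi.
rewrite /u in Hu; rewrite Hu Hdt E2 Hdphi in E1.
have E3 : (fun x => d v x + twist v (fun _ => 0) x) = d v.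
  by apply: functional_extensionality => y; rewrite /twist addr0.
rewrite E3 in E1.
apply: (twist_zero (t := t)) => //; apply: functional_extensionality => x.
by have := congr1 (fun f => f x) E1; rewrite /= add0r => <-.
Qed.

End Gen.

From mathcomp Require Import all_boot all_order all_algebra.
From mathcomp Require Import zify.
From Stdlib Require Import ClassicalEpsilon FunctionalExtensionality ProofIrrelevance Classical.
Unset Implicit Arguments. Unset Printing Implicit Defensive.
Import GRing.Theory.
Local Open Scope ring_scope.

Lemma nil_of_cover (a : word) : (forall x, inCyl a x) -> a = [::].
Proof.
case: a => // b a H; have := H (prepend [:: ~~ b] zs) 0%N isT.
by rewrite /prepend /=; case: b H.
Qed.

Lemma prefix_size_lt {a b : word} : prefix a b -> a != b -> (size a < size b)%N.
Proof.
move=> H Hne; have := size_prefix H; rewrite leq_eqVlt => /orP[/eqP E|//].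
by move: Hne; rewrite (prefix_same_size H E) eqxx.
Qed.

Section Gen2.
Variable L : zmodType.
Variable d : cochain L.
Hypothesis Hd : cocy L d.
Hypothesis Htr : forall a b, disj a b -> d (tr a b) = (fun _ => 0).

Lemma GEN_core n : forall v P, size P = n -> part P -> bij v -> (forall a, a \in P -> cylmap v a) ->
  d v = (fun _ => 0).
Proof.
elim/ltn_ind: n => n IHn v P Hs HP Hb Hc.
have IH : forall v' P', (size P' < size P)%N -> part P' -> bij v' ->
    (forall a, a \in P' -> cylmap v' a) -> d v' = (fun _ => 0).
  move=> v' P' H; apply: (IHn (size P')) => //; by rewrite -Hs.
case: (leqP (size P) 1) => Hs1.
  case: P Hs HP Hb Hc Hs1 IH => [|a [|? ?]] //= _ HP Hb Hc _ _.
    by have [m] := HP.1 zs.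
  have Ea : a = [::].
    apply: nil_of_cover => x; have [m] := HP.1 x; by rewrite inE => /eqP ->.
  have [a' Ha'] := Hc a (mem_head _ _); rewrite Ea in Ha'.
  have Ea' : a' = [::].
    apply: nil_of_cover => x; have [y Hy] := Hb.2 x; rewrite -Hy -(prepend_nil y) Ha'.
    exact: inCyl_prepend.
  have -> : v = (fun x => x).
    apply: functional_extensionality => y; by rewrite -{1}(prepend_nil y) Ha' Ea' prepend_nil.
  exact: cocy_id.
have [e [He0 He1]] := SIB HP Hs1.
set e0 := rcons e false in He0 *; set e1 := rcons e true in He1 *.
have Hne01 : e0 != e1 by apply/negP => /eqP /(congr1 (fun s => last false s)); rewrite !last_rcons.
have [g0 Hg0] := Hc _ He0; have [g1 Hg1] := Hc _ He1.
have Hg01 : disj g0 g1 := img_disj HP Hb He0 He1 Hne01 Hg0 Hg1.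
have Hoth : forall m, m \in P -> m != e0 -> m != e1 -> exists c,
    (forall y, v (prepend m y) = prepend c y) /\ disj c g0 /\ disj c g1.
  move=> m Hm H0 H1; have [c Hcm] := Hc m Hm; exists c; split => //; split.
    exact: img_disj HP Hb Hm He0 H0 Hcm Hg0.
  exact: img_disj HP Hb Hm He1 H1 Hcm Hg1.
case/lastP: g0 Hg0 Hg01 Hoth => [|h bt] Hg0 Hg01 Hoth.
  by move: Hg01; rewrite disj_nil_l.
set sib0 := rcons h (~~ bt).
have Hgs0 : disj (rcons h bt) sib0 := disj_sib h bt.
case: (altP (g1 =P sib0)) => [Eg1|Ng1].
  apply: (FINISH L d Hd Htr v P e (fun x => x) h bt IH HP Hb Hc He0 He1 V_id (cocy_id L d Hd)).
  - by move=> y; rewrite Hg0.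
  - by move=> y; rewrite Hg1 Eg1.
  - by move=> m Hm H0 H1; have [c [Hcm _]] := Hoth m Hm H0 H1; exists c.
case Hds : (disj sib0 g1).
  have Hd' : disj g1 sib0 by rewrite disjC.
  apply: (FINISH L d Hd Htr v P e (tr g1 sib0) h bt IH HP Hb Hc He0 He1 (tr_V Hd') (Htr _ _ Hd')).
  - move=> y; rewrite Hg0; apply: tr_out; apply: disj_prepend => //.
  - by move=> y; rewrite Hg1 tr_a.
  - move=> m Hm H0 H1; have [c [Hcm [Hc0 Hc1]]] := Hoth m Hm H0 H1.
    have [c' Hc'] : cylmap (tr g1 sib0) c.
      apply: tr_cylmap => //; first by right.
      exact: sib_rel Hc0.
    by exists c' => y; rewrite /= Hcm Hc'.
case/lastP: g1 Hg1 Hg01 Hoth Ng1 Hds => [|h1 bt1] Hg1 Hg01 Hoth Ng1 Hds.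
  by move: Hg01; rewrite disjC disj_nil_l.
set sib1 := rcons h1 (~~ bt1).
have Hd' : disj (rcons h bt) sib1.
  case: (not_disj (negbT Hds)) => Hp.
    have Hlt := prefix_size_lt Hp (negbT (introF eqP (fun E => (negP Ng1) (introT eqP (esym E))))).
    case Hd2 : (disj (rcons h bt) sib1) => //; case: (not_disj (negbT Hd2)) => Hp2.
      case: (prefix_rcons_cases Hp2) => [E|Hp3].
        have Hsz : size (rcons h bt) = size sib1 by rewrite E.
        move: Hlt Hsz; rewrite /sib0 /sib1 !size_rcons => Hlt [Hsz].
        by move: Hlt; rewrite Hsz ltnn.
      move: Hg01; rewrite /disj (prefix_trans Hp3) //; rewrite -cats1; exact: prefix_prefix.
    have := size_prefix Hp2; move: Hlt; rewrite /sib0 /sib1 !size_rcons => Hlt H2.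
    by have := leq_ltn_trans H2 Hlt; rewrite ltnn.
  case: (prefix_rcons_cases Hp) => [E|Hp3]; first by move: Ng1; rewrite E eqxx.
  have Hp4 : prefix (rcons h1 bt1) (rcons h bt).
    apply: (prefix_trans Hp3); rewrite -cats1; exact: prefix_prefix.
  by move: Hg01; rewrite /disj Hp4 andbF.
apply: (FINISH L d Hd Htr v P e (tr (rcons h bt) sib1) h1 (~~ bt1) IH HP Hb Hc He0 He1 (tr_V Hd') (Htr _ _ Hd')).
- by move=> y; rewrite Hg0 tr_a.
- move=> y; rewrite Hg1 negbK; apply: tr_out; apply: disj_prepend.
    by rewrite disjC.
  exact: disj_sib.
- move=> m Hm H0 H1; have [c [Hcm [Hc0 Hc1]]] := Hoth m Hm H0 H1.
  have [c' Hc'] : cylmap (tr (rcons h bt) sib1) c.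
    apply: tr_cylmap => //; first by right.
    exact: sib_rel Hc1.
  by exists c' => y; rewrite /= Hcm Hc'.
Qed.

Lemma GEN v : inV v -> d v = (fun _ => 0).
Proof.
move=> Hv; have [P [HP Hc]] := V_part Hv.
exact: (GEN_core (size P) v P erefl HP (V_bij Hv) Hc).
Qed.
End Gen2.

From mathcomp Require Import all_boot all_order all_algebra.
From mathcomp Require Import zify.
From Stdlib Require Import ClassicalEpsilon FunctionalExtensionality ProofIrrelevance Classical.
Unset Implicit Arguments. Unset Printing Implicit Defensive.
Import GRing.Theory.
Local Open Scope ring_scope.

Definition pq (a : word) (t : Q2) : Q2 :=
  exist _ (prepend a (proj1_sig t)) (proj2 (Q2_prepend a _) (proj2_sig t)).

Definition o : Q2 := exist _ zs (ex_intro _ 0%N (fun _ _ => erefl)).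

Lemma pq_cat a b t : pq (a ++ b) t = pq a (pq b t).
Proof. apply: Q2eq; by rewrite /= prependA. Qed.

Lemma pq_nil t : pq [::] t = t.
Proof. apply: Q2eq; by rewrite /= prepend_nil. Qed.

Lemma pq_o0 : pq [:: false] o = o.
Proof. apply: Q2eq; apply: functional_extensionality => i; rewrite /= /prepend; by case: i. Qed.

Lemma Q2_cases a b (x : Q2) : disj a b ->
  (exists t, x = pq a t) \/ (exists t, x = pq b t) \/
  (~ inCyl a (proj1_sig x) /\ ~ inCyl b (proj1_sig x)).
Proof.
move=> H; case: (preP a (proj1_sig x)) => Ha.
  left; exists (exist _ (shift (proj1_sig x) (size a)) (Q2_shift _ _ (proj2_sig x))).
  by apply: Q2eq; rewrite /= prepend_shift.
case: (preP b (proj1_sig x)) => Hb.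
  right; left; exists (exist _ (shift (proj1_sig x) (size b)) (Q2_shift _ _ (proj2_sig x))).
  by apply: Q2eq; rewrite /= prepend_shift.
by right; right.
Qed.

Lemma act_tr_a {a b} t : disj a b -> actQ (vinv (tr a b)) (pq a t) = pq b t.
Proof. move=> H; apply: Q2eq; by rewrite (actQ_Vinv _ (tr_V H)) vinv_tr //= tr_a. Qed.

Lemma act_tr_b {a b} t : disj a b -> actQ (vinv (tr a b)) (pq b t) = pq a t.
Proof. move=> H; apply: Q2eq; by rewrite (actQ_Vinv _ (tr_V H)) vinv_tr //= tr_b. Qed.

Lemma act_tr_out {a b} (p : Q2) : disj a b -> ~ inCyl a (proj1_sig p) -> ~ inCyl b (proj1_sig p) ->
  actQ (vinv (tr a b)) p = p.
Proof. move=> H Ha Hb; apply: Q2eq; by rewrite (actQ_Vinv _ (tr_V H)) vinv_tr // tr_out. Qed.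

Lemma notin_ext {a x} r : ~ inCyl a x -> ~ inCyl (a ++ r) x.
Proof. move=> H H'; apply: H; exact: inCyl_prefix (prefix_prefix a r) H'. Qed.

Lemma notin_rcons {a x} b : ~ inCyl a x -> ~ inCyl (rcons a b) x.
Proof. rewrite -cats1; exact: notin_ext. Qed.

Lemma disj_rcons {a b} b1 b2 : disj a b -> disj (rcons a b1) (rcons b b2).
Proof. rewrite -!cats1; exact: disj_ext. Qed.

Lemma tr_char {a b} (g : cantor -> cantor) : disj a b ->
  (forall t, g (prepend a t) = prepend b t) -> (forall t, g (prepend b t) = prepend a t) ->
  (forall x, ~ inCyl a x -> ~ inCyl b x -> g x = x) -> g = tr a b.
Proof.
move=> H Ha Hb Ho; apply: functional_extensionality => x.
case: (cyl_cases a b x H) => [[t ->]|[[t ->]|[H1 H2]]].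
- by rewrite Ha tr_a.
- by rewrite Hb tr_b.
- by rewrite Ho // tr_out.
Qed.

Lemma tr_conj {a b z} : disj a b -> disj a z -> disj b z ->
  tr a z = tr b z \o (tr a b \o tr b z).
Proof.
move=> Hab Haz Hbz; apply/esym/tr_char => //.
- move=> t; rewrite /comp.
  rewrite (tr_out (disj_prepend t Hab) (disj_prepend t Haz)) tr_a tr_a //.
- move=> t; rewrite /comp (tr_b t Hbz) (tr_b t Hab).
  by rewrite (tr_out (disj_prepend t Hab) (disj_prepend t Haz)).
- have Hza : disj z a by rewrite disjC.
  have Hzb : disj z b by rewrite disjC.
  move=> x Ha Hz; rewrite /comp; case: (preP b x) => Hb.
    rewrite -(prepend_shift Hb) tr_a.
    by rewrite (tr_out (disj_prepend _ Hza) (disj_prepend _ Hzb)) (tr_b _ Hbz).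
  by rewrite (tr_out Hb Hz) (tr_out Ha Hb) (tr_out Hb Hz).
Qed.

Lemma tr_split {a b} : disj a b ->
  tr a b = tr (rcons a false) (rcons b false) \o tr (rcons a true) (rcons b true).
Proof.
move=> H; have Hba : disj b a by rewrite disjC.
have Sa0 : disj (rcons a false) (rcons a true) := disj_sib a false.
have Sa1 : disj (rcons a true) (rcons a false) := disj_sib a true.
have Sb0 : disj (rcons b false) (rcons b true) := disj_sib b false.
have Sb1 : disj (rcons b true) (rcons b false) := disj_sib b true.
have D00 : disj (rcons a false) (rcons b false) := disj_rcons false false H.
have D01 : disj (rcons a false) (rcons b true) := disj_rcons false true H.
have D11 : disj (rcons a true) (rcons b true) := disj_rcons true true H.
have D10 : disj (rcons b true) (rcons a false) := disj_rcons true false Hba.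
have D10' : disj (rcons b false) (rcons a true) := disj_rcons false true Hba.
apply/esym/tr_char => //.
- move=> t; rewrite /comp (split1w a t) (split1w b t); case: (t 0%N).
    by rewrite tr_a (tr_out (disj_prepend _ D10) (disj_prepend _ Sb1)).
  by rewrite (tr_out (disj_prepend _ Sa0) (disj_prepend _ D01)) tr_a.
- move=> t; rewrite /comp (split1w a t) (split1w b t); case: (t 0%N).
    by rewrite (tr_b _ D11) (tr_out (disj_prepend _ Sa1) (disj_prepend _ (disj_rcons true false H))).
  by rewrite (tr_out (disj_prepend _ D10') (disj_prepend _ Sb0)) (tr_b _ D00).
- move=> x Ha Hb; rewrite /comp (tr_out (notin_rcons true Ha) (notin_rcons true Hb)).
  by rewrite (tr_out (notin_rcons false Ha) (notin_rcons false Hb)).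
Qed.

Lemma disj_nbhd {a x} N : ~ inCyl a x -> (size a <= N)%N ->
  disj (rcons (mkseq x N) (~~ x N)) a.
Proof.
move=> Ha HN; apply/andP; split; apply/negP => Hp.
  have := size_prefix Hp; rewrite size_rcons size_mkseq => H2.
  by have := leq_trans H2 HN; rewrite ltnn.
case: (prefix_rcons_cases Hp) => [E|Hp2].
  by have := HN; rewrite E size_rcons size_mkseq ltnn.
apply: Ha; apply: inCyl_prefix Hp2 _; apply/inCylP; by rewrite size_mkseq.
Qed.

Lemma notin_nbhd x N : ~ inCyl (rcons (mkseq x N) (~~ x N)) x.
Proof.
move=> H; have := H N; rewrite size_rcons size_mkseq ltnSn nth_rcons size_mkseq ltnn eqxx.
by move/(_ isT); case: (x N).
Qed.

Section Coc.
Variable L : zmodType.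
Variable c : cochain L.
Hypothesis Hc : cocy L c.

Lemma ev {v w} x : inV v -> inV w -> c (v \o w) x = c v x + c w (actQ (vinv v) x).
Proof. by move=> Hv Hw; rewrite (Hc v w Hv Hw). Qed.

Lemma c_tr_inv {a b} x : disj a b -> c (tr a b) x + c (tr a b) (actQ (vinv (tr a b)) x) = 0.
Proof.
move=> H; have E : tr a b \o tr a b = (fun x => x).
  apply: functional_extensionality => y; exact: tr_invol.
by have := ev x (tr_V H) (tr_V H); rewrite E (cocy_id L c Hc) => <-.
Qed.

Lemma psi0 {a b} (p : Q2) : disj a b -> ~ inCyl a (proj1_sig p) -> ~ inCyl b (proj1_sig p) ->
  c (tr a b) p = 0.
Proof.
set X := proj1_sig p.
pose G a b := [/\ disj a b, ~ inCyl a X & ~ inCyl b X].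
have Gd : forall a b, G a b -> disj a b by move=> ? ? [].
have Ga_ : forall a b, G a b -> ~ inCyl a X by move=> ? ? [].
have Gb_ : forall a b, G a b -> ~ inCyl b X by move=> ? ? [].
have Hfix : forall a b, G a b -> actQ (vinv (tr a b)) p = p.
  by move=> a0 b0 [H1 H2 H3]; apply: act_tr_out.
have H2 : forall a b, G a b -> c (tr a b) p + c (tr a b) p = 0.
  by move=> a0 b0 HG; have := c_tr_inv p (Gd _ _ HG); rewrite Hfix.
have Hconj : forall a b z, G a b -> G a z -> G b z -> c (tr a z) p = c (tr a b) p.
  move=> a0 b0 z G1 G2 G3.
  have D1 := Gd _ _ G1; have D2 := Gd _ _ G2; have D3 := Gd _ _ G3.
  rewrite (tr_conj D1 D2 D3) (ev p (tr_V D3) (V_comp (tr_V D1) (tr_V D3))) (Hfix _ _ G3).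
  rewrite (ev p (tr_V D1) (tr_V D3)) (Hfix _ _ G1).
  by rewrite addrCA H2 // addr0.
have Hsym : forall a b, disj a b -> c (tr a b) p = c (tr b a) p by move=> a0 b0 H; rewrite tr_sym.
have Gsym : forall a b, G a b -> G b a by move=> a0 b0 [H1 H3 H4]; split => //; rewrite disjC.
have Grc : forall a b b1 b2, G a b -> G (rcons a b1) (rcons b b2).
  move=> a0 b0 b1 b2 [H1 H3 H4]; split; [exact: disj_rcons | exact: notin_rcons | exact: notin_rcons].
have Hsplit : forall a b, G a b -> c (tr a b) p =
    c (tr (rcons a false) (rcons b false)) p + c (tr (rcons a true) (rcons b true)) p.
  move=> a0 b0 HG; have G0 := Grc _ _ false false HG; have G1 := Grc _ _ true true HG.
  rewrite (tr_split (Gd _ _ HG)) (ev p (tr_V (Gd _ _ G0)) (tr_V (Gd _ _ G1))).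
  by rewrite (Hfix _ _ G0).
move=> Hab Ha Hb; have HG : G a b by [].
set N := (size a + size b)%N.
set z := rcons (mkseq X N) (~~ X N).
have Gaz : G a z by split; [rewrite disjC; apply: disj_nbhd => //; lia | | exact: notin_nbhd].
have Gbz : G b z by split; [rewrite disjC; apply: disj_nbhd => //; lia | | exact: notin_nbhd].
have Gext : forall a' b', G a' z -> G b' z -> G a' b' ->
    forall bt, c (tr a' b') p = c (tr (rcons a' bt) (rcons b' bt)) p.
  move=> a' b' Ga Gb Gab bt.
  have Gza : G z a' by apply: Gsym.
  have Gza' : G z (rcons a' bt).
    split; [rewrite -cats1; apply: disj_extr; exact: Gd _ _ Gza | exact: Ga_ _ _ Gza | exact: notin_rcons bt (Gb_ _ _ Gza)].
  have Gzb' : G z (rcons b' bt).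
    split; [rewrite -cats1; apply: disj_extr; rewrite disjC; exact: Gd _ _ Gb | exact: Gb_ _ _ Gb | exact: notin_rcons bt (Ga_ _ _ Gb)].
  have Gab' : G a' (rcons b' bt).
    split; [rewrite -cats1; apply: disj_extr; exact: Gd _ _ Gab | exact: Ga_ _ _ Gab | exact: notin_rcons bt (Gb_ _ _ Gab)].
  have Gb'a' : G (rcons b' bt) (rcons a' bt) by apply: Gsym; apply: Grc.
  have Gb'z : G (rcons b' bt) z by apply: Gsym.
  rewrite -(Hconj a' b' z Gab Ga Gb) (Hsym _ _ (Gd _ _ Ga)).
  rewrite -(Hconj z a' (rcons b' bt) Gza Gzb' Gab') (Hsym _ _ (Gd _ _ Gzb')).
  rewrite -(Hconj (rcons b' bt) z (rcons a' bt) Gb'z Gb'a' Gza').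
  by rewrite (Hsym _ _ (Gd _ _ Gb'a')).
have E0 := Gext a b Gaz Gbz HG false; have E1 := Gext a b Gaz Gbz HG true.
have := Hsplit a b HG; rewrite -E0 -E1 => E.
have := congr1 (fun w => w - c (tr a b) p) E; by rewrite subrr addrK => <-.
Qed.
End Coc.

From mathcomp Require Import all_boot all_order all_algebra.
From mathcomp Require Import zify.
From Stdlib Require Import ClassicalEpsilon FunctionalExtensionality ProofIrrelevance Classical.
Unset Implicit Arguments. Unset Printing Implicit Defensive.
Import GRing.Theory.
Local Open Scope ring_scope.

Definition r1 : word := [:: false; false].
Definition r2 : word := [:: false; true].
Definition r3 : word := [:: true; false].
Definition r4 : word := [:: true; true].

Lemma two_cases (X r : word) : (2 <= size X)%N -> size r = 2%N -> disj X r \/ prefix r X.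
Proof.
move=> HX Hr; case Hd : (disj X r); first by left.
case: (not_disj (negbT Hd)) => H; last by right.
right; have := size_prefix H; rewrite Hr => H2.
have E : X = r by apply: prefix_same_size H _; rewrite Hr; apply/eqP; rewrite eqn_leq H2 HX.
by rewrite E prefix_refl.
Qed.

Lemma disj_of_prefix {r X r' : word} : prefix r X -> disj r r' -> disj X r'.
Proof. by case/prefixP => s ->; apply: disj_extl. Qed.

Lemma Q2_decomp (t : Q2) n : exists r : word, (n <= size r)%N /\ t = pq r o.
Proof.
case: (proj2_sig t) => N HN.
exists (mkseq (proj1_sig t) (maxn N n)); split; first by rewrite size_mkseq leq_maxr.
apply: Q2eq; apply: functional_extensionality => i; rewrite /= /prepend size_mkseq.
case: ltnP => Hi; first by rewrite nth_mkseq.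
rewrite HN //; apply: leq_trans Hi; exact: leq_maxl.
Qed.

Section Coc2.
Variable L : zmodType.
Variable c : cochain L.
Hypothesis Hc : cocy L c.

Definition h a b t := c (tr a b) (pq a t).

Lemma hA {a b} t : disj a b -> h b a t = - h a b t.
Proof.
move=> H; rewrite /h -(tr_sym H).
have := c_tr_inv L c Hc (pq a t) H; rewrite act_tr_a // => E.
by rewrite -[LHS](addKr (c (tr a b) (pq a t))) E addr0.
Qed.

Lemma hB {x y z} t : disj x y -> disj x z -> disj y z -> h x z t = h x y t + h y z t.
Proof.
move=> Hxy Hxz Hyz; rewrite /h (tr_conj Hxy Hxz Hyz).
rewrite (ev L c Hc _ (tr_V Hyz) (V_comp (tr_V Hxy) (tr_V Hyz))).
rewrite (psi0 L c Hc (pq x t) Hyz (disj_prepend _ Hxy) (disj_prepend _ Hxz)) add0r.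
rewrite (act_tr_out (pq x t) Hyz (disj_prepend _ Hxy) (disj_prepend _ Hxz)).
by rewrite (ev L c Hc _ (tr_V Hxy) (tr_V Hyz)) act_tr_a.
Qed.

Lemma hC {x y} t bt : disj x y -> h x y (pq [:: bt] t) = h (rcons x bt) (rcons y bt) t.
Proof.
move=> H; have Hyx : disj y x by rewrite disjC.
have Ep : pq x (pq [:: bt] t) = pq (rcons x bt) t by rewrite -cats1 pq_cat.
have D00 : disj (rcons x false) (rcons y false) := disj_rcons false false H.
have D11 : disj (rcons x true) (rcons y true) := disj_rcons true true H.
rewrite /h Ep (tr_split H) (ev L c Hc _ (tr_V D00) (tr_V D11)).
case: bt Ep => Ep.
  rewrite (psi0 L c Hc (pq (rcons x true) t) D00 (disj_prepend _ (disj_sib x true)) (disj_prepend _ (disj_rcons true false H))).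
  rewrite add0r act_tr_out //.
    exact: disj_prepend _ (disj_sib x true).
  exact: disj_prepend _ (disj_rcons true false H).
rewrite act_tr_a //.
by rewrite (psi0 L c Hc (pq (rcons y false) t) D11 (disj_prepend _ (disj_rcons false true Hyx)) (disj_prepend _ (disj_sib y false))) addr0.
Qed.

Definition H a b := h a b o.

Lemma h_tail r : forall a b, disj a b -> h a b (pq r o) = H (a ++ r) (b ++ r).
Proof.
elim: r => [|bt r IH] a b Hab; first by rewrite pq_nil !cats0.
rewrite -cat1s pq_cat hC // IH; last exact: disj_rcons.
by rewrite !cat_rcons.
Qed.

Definition Ef x z := H x z + H z (rcons x false).

Lemma E1 {x z z'} : disj x z -> disj x z' -> disj z z' -> Ef x z = Ef x z'.
Proof.
move=> Hxz Hxz' Hzz'.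
have Hz'z : disj z' z by rewrite disjC.
have Hzx0 : disj z (rcons x false) by rewrite -cats1 disjC; apply: disj_extl.
have Hz'x0 : disj z' (rcons x false) by rewrite -cats1 disjC; apply: disj_extl.
rewrite /Ef /H (hB o Hxz' Hxz Hz'z) (hB o Hzz' Hzx0 Hz'x0) (hA o Hzz').
by rewrite addrA addrNK.
Qed.

Lemma E2 {x x' z} : disj x x' -> disj x z -> disj x' z -> Ef x z = Ef x' z.
Proof.
move=> Hxx' Hxz Hx'z.
have Hzx'0 : disj z (rcons x' false) by rewrite -cats1 disjC; apply: disj_extl.
have Hzx0 : disj z (rcons x false) by rewrite -cats1 disjC; apply: disj_extl.
have Hx'0x0 : disj (rcons x' false) (rcons x false) by apply: disj_rcons; rewrite disjC.
have Hx0x'0 : disj (rcons x false) (rcons x' false) by apply: disj_rcons.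
rewrite /Ef /H (hB o Hxx' Hxz Hx'z) (hB o Hzx'0 Hzx0 Hx'0x0) (hA o Hx0x'0).
rewrite -(hC o false Hxx') pq_o0.
by rewrite [h x x' o + _]addrC -addrA (addrCA (h x x' o)) subrr addr0.
Qed.

Definition zeta := Ef r4 r1.

Lemma EZ1 {X} : (2 <= size X)%N -> disj X r1 -> Ef X r1 = zeta.
Proof.
move=> HX H1; case: (two_cases X r4 HX erefl) => H4.
  by rewrite (E2 H4 H1).
have H3 : disj X r3 by apply: (disj_of_prefix H4).
by rewrite (E2 H3 H1) //; rewrite (E2 (x := r3) (x' := r4)).
Qed.

Lemma EZ {X r} : (2 <= size X)%N -> (r = r1 \/ r = r2 \/ r = r3) -> disj X r -> Ef X r = zeta.
Proof.
move=> HX Hr Hd; case: (two_cases X r1 HX erefl) => H1.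
  case: Hr => [->|Hr]; first exact: EZ1.
  rewrite (E1 (z' := r1) Hd H1); first exact: EZ1.
  by case: Hr => ->.
have H4 : disj X r4 by apply: (disj_of_prefix H1).
case: Hr => [Er|Hr]; first by move: Hd; rewrite Er /disj H1 andbF.
rewrite (E2 H4 Hd); last by case: Hr => ->.
rewrite (E1 (z' := r1)) //; by case: Hr => ->.
Qed.

Definition Pf (X : word) :=
  if disj X r1 then H X r1 else if disj X r2 then H X r2 + H r2 r1 else H X r3 + H r3 r1.

Definition Kf (r : word) := if r == r1 then 0 else H r r1.

Ltac clash := match goal with
  | A : is_true (prefix ?r ?W), B : is_true (prefix ?s ?W) |- _ =>
      (have := pre_comm A B; by [])
  end.

Lemma Kswitch {X ri r} : (ri = r1 \/ ri = r2 \/ ri = r3) -> (r = r1 \/ r = r2 \/ r = r3) ->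
  disj X ri -> disj X r -> H X ri + Kf ri = H X r + Kf r.
Proof.
move=> Hri Hr Di Dr.
case: (altP (ri =P r)) => [->//|Hne].
have Drri : disj r ri by case: Hri Hr Hne => [->|[->|->]] [->|[->|->]].
rewrite /H (hB o Dr Di Drri) -addrA; congr (_ + _); rewrite /Kf.
case: Hri Hr Hne Drri => [->|[->|->]] [->|[->|->]] //= _ Drri; rewrite /H;
  first [ by rewrite addr0 | by rewrite (hA o Drri) addrN | by rewrite -(hB (z := r1) o Drri erefl erefl) ].
Qed.

Lemma Pall {X r} : (2 <= size X)%N -> (r = r1 \/ r = r2 \/ r = r3) -> disj X r -> Pf X = H X r + Kf r.
Proof.
move=> HX Hr Dr; rewrite /Pf.
case D1 : (disj X r1).
  by rewrite -(Kswitch (or_introl erefl) Hr D1 Dr) /Kf eqxx addr0.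
case D2 : (disj X r2).
  by rewrite -(Kswitch (or_intror (or_introl erefl)) Hr D2 Dr).
exfalso; case: (two_cases X r1 HX erefl) => P1; first by rewrite P1 in D1.
case: (two_cases X r2 HX erefl) => P2; first by rewrite P2 in D2.
clash.
Qed.

Lemma Pdiff {X Y} : (2 <= size X)%N -> (2 <= size Y)%N -> disj X Y -> H X Y = Pf X - Pf Y.
Proof.
move=> HX HY Dxy.
have [r [Hr [Dx Dy]]] : exists r, (r = r1 \/ r = r2 \/ r = r3) /\ disj X r /\ disj Y r.
  case: (two_cases X r1 HX erefl) => A1; case: (two_cases Y r1 HY erefl) => B1;
  first (by exists r1; split; [left|split]);
  case: (two_cases X r2 HX erefl) => A2; case: (two_cases Y r2 HY erefl) => B2;
  try (by exists r2; split; [right; left|split]);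
  case: (two_cases X r3 HX erefl) => A3; case: (two_cases Y r3 HY erefl) => B3;
  try (by exists r3; split; [right; right|split]); clash.
have Dry : disj r Y by rewrite disjC.
rewrite /H (hB o Dx Dxy Dry) -/(H X r) -/(H Y r) (Pall HX Hr Dx) (Pall HY Hr Dy).
rewrite /H (hA o Dy); by rewrite [h Y r o + _]addrC addrKA.
Qed.

Lemma P0 {X} : (2 <= size X)%N -> Pf (rcons X false) = Pf X - zeta.
Proof.
move=> HX.
have [r [Hr Dx]] : exists r, (r = r1 \/ r = r2 \/ r = r3) /\ disj X r.
  case: (two_cases X r1 HX erefl) => A1; first by exists r1; split => //; left.
  case: (two_cases X r2 HX erefl) => A2; first by exists r2; split => //; right; left.
  clash.
have HX0 : (2 <= size (rcons X false))%N by rewrite size_rcons; apply: leqW.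
have Dx0 : disj (rcons X false) r by rewrite -cats1; apply: disj_extl.
rewrite (Pall HX0 Hr Dx0) (Pall HX Hr Dx) -(EZ HX Hr Dx) /Ef.
have Drx0 : disj r (rcons X false) by rewrite disjC.
rewrite /H -/(H r (rcons X false)) /H (hA o Drx0).
by rewrite [h X r o + Kf r]addrC addrKA addrC.
Qed.

End Coc2.

From mathcomp Require Import all_boot all_order all_algebra.
From mathcomp Require Import zify.
From Stdlib Require Import ClassicalEpsilon FunctionalExtensionality ProofIrrelevance Classical.
Unset Implicit Arguments. Unset Printing Implicit Defensive.
Import GRing.Theory.
Local Open Scope ring_scope.

Lemma zid {L : zmodType} (A B u v w : L) : A - B = (v - u) + (A + (u + w)) - (B + (v + w)).
Proof.
have E1 : (A + (u + w)) - (B + (v + w)) = (A - B) + (u - v).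
  rewrite opprD addrACA; congr (_ + _); by rewrite [v + w]addrC addrKA.
by rewrite -addrA E1 addrCA subrKA subrr addr0.
Qed.

Lemma zext (X Y : word) : prepend X zs = prepend Y zs -> (size X <= size Y)%N ->
  Y = X ++ nseq (size Y - size X) false.
Proof.
move=> E HXY; apply: (@eq_from_nth _ false).
  by rewrite size_cat size_nseq subnKC.
move=> i Hi; have := congr1 (fun f => f i) E; rewrite /prepend Hi nth_cat nth_nseq.
by case: ltnP => //; case: ltnP.
Qed.

Lemma pq_nseq n : pq (nseq n false) o = o.
Proof.
apply: Q2eq; apply: functional_extensionality => i; rewrite /= /prepend nth_nseq size_nseq.
by case: ltnP.
Qed.

Section Coc3.
Variable L : zmodType.
Variable c : cochain L.
Hypothesis Hc : cocy L c.

Definition Nof (p : Q2) : nat :=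
  epsilon (inhabits 0%N) (fun N => (2 <= N)%N /\ p = pq (mkseq (proj1_sig p) N) o).

Lemma Nof_spec p : (2 <= Nof p)%N /\ p = pq (mkseq (proj1_sig p) (Nof p)) o.
Proof.
apply: (@epsilon_spec _ (inhabits 0%N) (fun N => (2 <= N)%N /\ p = pq (mkseq (proj1_sig p) N) o)).
have [r [Hr Ep]] := Q2_decomp p 2.
have Ev : proj1_sig p = prepend r zs by rewrite Ep.
exists (size r); split => //.
have -> : mkseq (proj1_sig p) (size r) = r by rewrite Ev; apply/inCylP; apply: inCyl_prepend.
exact: Ep.
Qed.

Definition ff (p : Q2) : L := Pf L c (mkseq (proj1_sig p) (Nof p)) + zeta L c *+ Nof p.

Lemma Pext X k : (2 <= size X)%N -> Pf L c (X ++ nseq k false) = Pf L c X - zeta L c *+ k.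
Proof.
move=> HX; elim: k => [|k IH]; first by rewrite cats0 mulr0n subr0.
have -> : X ++ nseq k.+1 false = rcons (X ++ nseq k false) false.
  rewrite -cats1 -catA; congr (X ++ _); by elim: k {IH} => //= k ->.
rewrite (P0 L c Hc); last by rewrite size_cat (leq_trans HX) // leq_addr.
by rewrite IH mulrSr (opprD (zeta L c *+ k)) addrA.
Qed.

Lemma f_spec X p : (2 <= size X)%N -> p = pq X o -> ff p = Pf L c X + zeta L c *+ size X.
Proof.
move=> HX Ep; have [HN Ep'] := Nof_spec p; rewrite /ff.
set Y := mkseq (proj1_sig p) (Nof p) in Ep' *.
have HY : size Y = Nof p by rewrite size_mkseq.
have E : prepend X zs = prepend Y zs.
  by rewrite -[prepend X zs]/(proj1_sig (pq X o)) -Ep {1}Ep'.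
case: (leqP (size X) (size Y)) => Hle.
  have EY := zext X Y E Hle; set k := (size Y - size X)%N in EY.
  rewrite -HY EY (Pext X k HX) size_cat size_nseq mulrnDr.
  by rewrite -addrA; congr (_ + _); rewrite addrCA addNr addr0.
have Hle' : (size Y <= size X)%N by apply: ltnW.
have EX := zext Y X (esym E) Hle'; set k := (size X - size Y)%N in EX.
have HY2 : (2 <= size Y)%N by rewrite HY.
rewrite EX (Pext Y k HY2) size_cat size_nseq mulrnDr HY.
by rewrite -addrA; congr (_ + _); rewrite addrCA addNr addr0.
Qed.

Lemma formula {a b} t : disj a b ->
  c (tr a b) (pq a t) = zeta L c *~ ((size b)%:Z - (size a)%:Z) + ff (pq a t) - ff (pq b t).
Proof.
move=> Hab; have [r [Hr ->]] := Q2_decomp t 2.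
have Ha : (2 <= size (a ++ r))%N by rewrite size_cat (leq_trans Hr) // leq_addl.
have Hb : (2 <= size (b ++ r))%N by rewrite size_cat (leq_trans Hr) // leq_addl.
change (h L c a b (pq r o) = zeta L c *~ ((size b)%:Z - (size a)%:Z) + ff (pq a (pq r o)) - ff (pq b (pq r o))).
rewrite (h_tail L c Hc r a b Hab) (Pdiff L c Hc Ha Hb (disj_ext r r Hab)).
rewrite -!pq_cat (f_spec (a ++ r)) // (f_spec (b ++ r)) // mulrzBl_nat -!pmulrn !size_cat !mulrnDr.
exact: zid.
Qed.
End Coc3.

From mathcomp Require Import all_boot all_order all_algebra.
From mathcomp Require Import zify.
From Stdlib Require Import ClassicalEpsilon FunctionalExtensionality ProofIrrelevance Classical.
Unset Implicit Arguments. Unset Printing Implicit Defensive.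
Import GRing.Theory.
Local Open Scope ring_scope.

Section S.
Variable L : zmodType.

Lemma s_V (z : L) v x : inV v -> s z v x = z *~ logslope v (vinv v (proj1_sig x)).
Proof. move=> Hv; rewrite /s; destruct (excluded_middle_informative (inV v)) as [H|H]; [by rewrite actQ_Vinv | by case: H]. Qed.

Lemma s_nV (z : L) v : ~ inV v -> s z v = (fun _ => 0).
Proof. move=> Hv; apply: functional_extensionality => x; rewrite /s; destruct (excluded_middle_informative (inV v)) as [H|H] => //. Qed.

Lemma s_Coc (z : L) : Coc (s z).
Proof.
split; last exact: s_nV.
move=> v w Hv Hw; apply: functional_extensionality => x.
rewrite (s_V z _ _ (V_comp Hv Hw)) (s_V z _ _ Hv) /twist (s_V z _ _ Hw) actQ_Vinv //.
rewrite (vinv_comp (V_bij Hv) (V_bij Hw)) (ls_comp _ (V_loc Hv) (V_loc Hw)).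
by rewrite (vinvK (V_bij Hw)) mulrzDr.
Qed.

Lemma s_add (z1 z2 : L) v x : s (z1 + z2) v x = s z1 v x + s z2 v x.
Proof. rewrite /s; destruct (excluded_middle_informative (inV v)); by rewrite ?mulrzDl ?addr0. Qed.

Lemma s_tr_a (z : L) {a b} t : disj a b -> s z (tr a b) (pq a t) = z *~ ((size b)%:Z - (size a)%:Z).
Proof.
move=> H; rewrite (s_V z _ _ (tr_V H)) (vinv_tr H) /= tr_a.
rewrite (ls_spec (m := b) (m' := a)) //; first exact: inCyl_prepend.
by move=> y; rewrite tr_b.
Qed.

Lemma s_tr_out (z : L) {a b} (p : Q2) : disj a b -> ~ inCyl a (proj1_sig p) -> ~ inCyl b (proj1_sig p) ->
  s z (tr a b) p = 0.
Proof.
move=> H Ha Hb; rewrite (s_V z _ _ (tr_V H)) (vinv_tr H) (tr_out Ha Hb).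
set X := proj1_sig p; set m := mkseq X (size a + size b).
rewrite (ls_spec (m := m) (m' := m)) ?subrr ?mulr0z //.
  by apply/inCylP; rewrite size_mkseq.
move=> y; apply: tr_out; apply: notcyl_nbhd => //; lia.
Qed.

Definition sd (z : L) (f : Q2 -> L) : cochain L := fun v x => s z v x + f x - twist v f x.

Lemma act_comp {v w} (x : Q2) : inV v -> inV w ->
  actQ (vinv (v \o w)) x = actQ (vinv w) (actQ (vinv v) x).
Proof.
move=> Hv Hw; apply: Q2eq; rewrite (actQ_Vinv _ (V_comp Hv Hw)) (actQ_Vinv _ Hw) (actQ_Vinv _ Hv).
by rewrite (vinv_comp (V_bij Hv) (V_bij Hw)).
Qed.

Lemma cocy_sd z f : cocy L (sd z f).
Proof.
move=> v w Hv Hw; apply: functional_extensionality => x.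
rewrite /sd (s_Coc z).1 // /twist (act_comp x Hv Hw).
set A := s z v x; set B := s z w (actQ (vinv v) x); set F0 := f x;
set F1 := f (actQ (vinv v) x); set F2 := f (actQ (vinv w) (actQ (vinv v) x)).
(* A + B + F0 - F2 = A + F0 - F1 + (B + F1 - F2) *)
rewrite [B + F1]addrC -[F1 + B - F2]addrA subrKA addrA; congr (_ - _); by rewrite addrAC.
Qed.

Lemma cocy_sub (c1 c2 : cochain L) : cocy L c1 -> cocy L c2 -> cocy L (fun v x => c1 v x - c2 v x).
Proof.
move=> H1 H2 v w Hv Hw; apply: functional_extensionality => x.
rewrite H1 // H2 // /twist opprD addrACA; by [].
Qed.
End S.

From mathcomp Require Import all_boot all_order all_algebra.
From mathcomp Require Import zify.
From Stdlib Require Import ClassicalEpsilon FunctionalExtensionality ProofIrrelevance Classical.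
Unset Implicit Arguments. Unset Printing Implicit Defensive.
Import GRing.Theory.
Local Open Scope ring_scope.

Section T.
Variable L : zmodType.

Lemma exist_rep (c : cochain L) : Coc c -> exists z f, rep c z f.
Proof.
move=> HC; have Hc : cocy L c := HC.1.
set z := zeta L c; set f := ff L c.
pose d : cochain L := fun v x => c v x - sd L z f v x.
have Hd : cocy L d := cocy_sub L c (sd L z f) Hc (cocy_sd L z f).
have Htr : forall a b, disj a b -> d (tr a b) = (fun _ => 0).
  have Ka : forall a b t, disj a b -> d (tr a b) (pq a t) = 0.
    move=> a b t H; rewrite /d /sd (formula L c Hc t H) (s_tr_a L z t H) /twist (act_tr_a t H).
    by rewrite subrr.
  move=> a b H; apply: functional_extensionality => x.
  case: (Q2_cases a b x H) => [[t ->]|[[t ->]|[Ha Hb]]].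
  - exact: Ka.
  - have H' : disj b a by rewrite disjC.
    rewrite (tr_sym H); exact: Ka.
  - rewrite /d /sd (psi0 L c Hc x H Ha Hb) (s_tr_out L z x H Ha Hb) /twist (act_tr_out x H Ha Hb).
    by rewrite addrK subrr.
exists z, f => v Hv; apply: functional_extensionality => x.
have := congr1 (fun g => g x) (GEN L d Hd Htr v Hv); rewrite /d /= => /eqP.
by rewrite subr_eq0 => /eqP.
Qed.

Lemma uniq_rep (c : cochain L) z f z' f' : rep c z f -> rep c z' f' ->
  z' = z /\ exists a, f' = (fun x => f x + a).
Proof.
move=> R R'.
have key : forall a b t, disj a b ->
    z *~ ((size b)%:Z - (size a)%:Z) + f (pq a t) - f (pq b t) =
    z' *~ ((size b)%:Z - (size a)%:Z) + f' (pq a t) - f' (pq b t).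
  move=> a b t H; have := congr1 (fun g => g (pq a t)) (R _ (tr_V H)).
  rewrite (congr1 (fun g => g (pq a t)) (R' _ (tr_V H))) /= (s_tr_a L z t H) (s_tr_a L z' t H).
  by rewrite /twist (act_tr_a t H).
set q := pq [:: true] o.
have K1 := key [:: true] [:: false] o erefl.
rewrite subrr !mulr0z !add0r pq_o0 -/q in K1.
have K2 := key [:: false] [:: true; false] o erefl.
have E21 : ((size [:: true; false])%:Z - (size [:: false])%:Z) = 1 by [].
have Eq : pq [:: true; false] o = q.
  by change (pq ([:: true] ++ [:: false]) o = pq [:: true] o); rewrite pq_cat pq_o0.
rewrite E21 !mulr1z pq_o0 Eq -!addrA in K2.
have K1' : f o - f q = f' o - f' q by rewrite -opprB K1 opprB.
rewrite K1' in K2; have Ez := addIr _ K2.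
split => //; exists (f' o - f o); apply: functional_extensionality => p.
have [r [Hr Ep]] := Q2_decomp p 1.
set zr := nseq (size r) false.
have Ezr : pq zr o = o by exact: pq_nseq.
case: (altP (r =P zr)) => [Er|Nr].
  by rewrite Ep Er Ezr addrC subrK.
have Hd : disj r zr.
  apply/andP; split; apply/negP => Hp; move: Nr; rewrite (prefix_same_size Hp) ?eqxx //;
  by rewrite /zr size_nseq.
have K3 := key r zr o Hd.
rewrite /zr size_nseq subrr !mulr0z !add0r -/zr Ezr -Ep in K3.
by rewrite addrCA K3 addrCA subrr addr0.
Qed.
End T.

From mathcomp Require Import all_boot all_order all_algebra.
From Stdlib Require Import ClassicalEpsilon FunctionalExtensionality ProofIrrelevance Classical.
Import GRing.Theory.
Local Open Scope ring_scope.

Lemma Coc_cadd (L : zmodType) (c d : cochain L) : Coc c -> Coc d -> Coc (cadd c d).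
Proof.
move=> [Hc1 Hc2] [Hd1 Hd2]; split.
  move=> v w Hv Hw; apply: functional_extensionality => x.
  by rewrite /cadd Hc1 // Hd1 // /twist addrACA.
move=> v Hv; apply: functional_extensionality => x.
by rewrite /cadd Hc2 // Hd2 // addr0.
Qed.

Lemma Coc_copp (L : zmodType) (c : cochain L) : Coc c -> Coc (copp c).
Proof.
move=> [Hc1 Hc2]; split.
  move=> v w Hv Hw; apply: functional_extensionality => x.
  by rewrite /copp Hc1 // /twist opprD.
move=> v Hv; apply: functional_extensionality => x.
by rewrite /copp Hc2 // oppr0.
Qed.

Lemma z6 (L : zmodType) (A F G B F' G' : L) :
  A + F - G + (B + F' - G') = A + B + (F + F') - (G + G').
Proof.
by rewrite opprD addrACA -!addrA; congr (_ + _); rewrite addrCA !addrA.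
Qed.

Lemma z7 (L : zmodType) (u f1 f2 a : L) : u + f1 - f2 = u + (f1 + a) - (f2 + a).
Proof. by rewrite addrA [f2 + a]addrC addrKA. Qed.

Theorem mainTheorem16 (L : zmodType) :
  (* (1) Coc is a subgroup of the abelian group of cochains (pointwise product) *)
  (Coc (czero L) /\
   (forall c d : cochain L, Coc c -> Coc d -> Coc (cadd c d)) /\
   (forall c : cochain L, Coc c -> Coc (copp c))) /\
  (* (2) *)
  (forall zeta : L, Coc (s zeta)) /\
  (* (3) *)
  (forall c : cochain L, Coc c ->
     exists (zeta : L) (f : Q2 -> L), rep c zeta f /\
       forall (zeta' : L) (f' : Q2 -> L), rep c zeta' f' ->
         zeta' = zeta /\ exists a : L, f' = (fun x => f x + a)) /\
  (* (4) *)
  (exists Phi : cochain L -> L * (Q2 -> L),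
     (forall c, Coc c -> rep c (Phi c).1 (Phi c).2) /\
     (forall c d, Coc c -> Coc d -> eqmod (Phi (cadd c d)) (padd (Phi c) (Phi d))) /\
     (forall c d, Coc c -> Coc d -> eqmod (Phi c) (Phi d) -> c = d) /\
     (forall p : L * (Q2 -> L), exists c, Coc c /\ eqmod (Phi c) p)).
Proof.
split.
  split.
    split.
      move=> v w _ _; apply: functional_extensionality => x.
      by rewrite /czero /twist addr0.
    by [].
  split; [exact: Coc_cadd | exact: Coc_copp].
split; first exact: s_Coc.
split.
  move=> c Hc; have [z [f R]] := exist_rep L c Hc; exists z, f; split => //.
  move=> z' f' R'; exact: uniq_rep R R'.
pose Phi := fun c : cochain L =>
  epsilon (inhabits ((0 : L), fun _ : Q2 => (0 : L))) (fun p : L * (Q2 -> L) => rep c p.1 p.2).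
have HPhi : forall c, Coc c -> rep c (Phi c).1 (Phi c).2.
  move=> c Hc; rewrite /Phi.
  apply: (@epsilon_spec _ (inhabits ((0 : L), fun _ : Q2 => (0 : L))) (fun p : L * (Q2 -> L) => rep c p.1 p.2)).
  have [z [f R]] := exist_rep L c Hc; by exists (z, f).
exists Phi; split; first exact: HPhi.
split.
  move=> c d Hc Hd.
  have Rcd : rep (cadd c d) ((Phi c).1 + (Phi d).1) (fun x => (Phi c).2 x + (Phi d).2 x).
    move=> v Hv; apply: functional_extensionality => x.
    rewrite /cadd (HPhi c Hc v Hv) (HPhi d Hd v Hv) s_add /twist.
    exact: z6.
  have [E1 [a Ea]] := uniq_rep L _ _ _ _ _ (HPhi _ (Coc_cadd L c d Hc Hd)) Rcd.
  split; first exact: (esym E1).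
  by exists a.
split.
  move=> c d Hc Hd [E [a Ea]]; apply: functional_extensionality => v.
  case: (classic (inV v)) => Hv.
    rewrite (HPhi c Hc v Hv) (HPhi d Hd v Hv) -E Ea; apply: functional_extensionality => x.
    rewrite /twist; exact: z7.
  by rewrite (proj2 Hc v Hv) (proj2 Hd v Hv).
move=> [z f].
pose c : cochain L := fun v => if excluded_middle_informative (inV v) then sd L z f v else (fun _ => 0).
have Hc : Coc c.
  split.
    move=> v w Hv Hw; rewrite /c.
    destruct (excluded_middle_informative (inV (v \o w))) as [H1|H1]; last by case: (H1 (V_comp Hv Hw)).
    destruct (excluded_middle_informative (inV v)) as [H2|H2]; last by case: (H2 Hv).
    destruct (excluded_middle_informative (inV w)) as [H3|H3]; last by case: (H3 Hw).
    exact: cocy_sd.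
  move=> v Hv; rewrite /c.
  by destruct (excluded_middle_informative (inV v)) as [H1|H1]; first by case: (Hv H1).
have Rc : rep c z f.
  move=> v Hv; rewrite /c.
  by destruct (excluded_middle_informative (inV v)) as [H1|H1]; last by case: (H1 Hv).
exists c; split => //.
have [E [a Ea]] := uniq_rep L _ _ _ _ _ (HPhi c Hc) Rc.
split; first exact: (esym E).
by exists a.
Qed.
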